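(* Let $(\mu_z^\varepsilon)$ be a time-analytic local random walk on $\mathcal G$. For every fixed pair of distinct vertices $x,y$, the function $\varepsilon\mapsto{}^{\mathcal O}\mathrm{Ric}_\varepsilon(x,y)$ is locally Lipschitz on $(0,1)$ and is piecewise analytic, with finitely many distinct analytic pieces on $[0,1]$. The same holds with ''time-analytic'' replaced by ''time-affine'' (resp. ''time-polynomial'') and ''piecewise analytic'' replaced by ''piecewise affine'' (resp. ''piecewise polynomial'').
   Context: $\mathcal G$ is a locally finite graph with vertex set $V$, and $\mathrm d$ is a distance on $V$ with $(V,\mathrm d)$ complete. A random walk is a family of probability measures $\mu_z^\varepsilon$ on $V$ ($z\in V$, $\varepsilon\in[0,1]$) with finite first moments, continuous in $\varepsilon$, $\mu_z^0=\delta_z$. It is local if for each $z$ there is a finite set $\mathcal K_z\subset V$ with $\mathrm{supp}(\mu_z^\varepsilon)\subset\mathcal K_z$ for all $\varepsilon$. It is time-analytic (resp. time-affine, time-polynomial) if for all $x,y$ the function $p_{xy}(\varepsilon):=\mu_x^\varepsilon(y)$ is analytic (resp. affine, polynomial) in $\varepsilon$ and admits an analytic continuation to $(-\delta_{xy},1+\delta_{xy})$ for some $\delta_{xy}>0$ (the continuation need not be a probability measure). $\mathcal W_1$ is the $L^1$-Wasserstein distance with respect to $\mathrm d$, and ${}^{\mathcal O}\mathrm{Ric}_\varepsilon(x,y):=1-\mathcal W_1(\mu_x^\varepsilon,\mu_y^\varepsilon)/\mathrm d(x,y)$. *)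

(* Defs.v *)
From Stdlib Require Import Reals List.
From Coquelicot Require Import Coquelicot.
Import ListNotations.
Open Scope R_scope.

Definition locally_finite_graph {V : Type} (E : V -> V -> Prop) : Prop :=
  (forall x y, E x y -> E y x) /\
  (forall x, exists L : list V, forall y, E x y -> In y L).

Definition is_distance {V : Type} (d : V -> V -> R) : Prop :=
  (forall x y, 0 <= d x y) /\
  (forall x y, d x y = 0 <-> x = y) /\
  (forall x y, d x y = d y x) /\
  (forall x y z, d x z <= d x y + d y z).

Definition complete_distance {V : Type} (d : V -> V -> R) : Prop :=
  forall u : nat -> V,
    (forall e, 0 < e -> exists N, forall m n, (N <= m)%nat -> (N <= n)%nat ->
        d (u m) (u n) < e) ->
    exists l, forall e, 0 < e -> exists N, forall n, (N <= n)%nat -> d (u n) l < e.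

Definition fsum {V : Type} (L : list V) (f : V -> R) : R :=
  fold_right (fun v acc => f v + acc) 0 L.

(** A random walk is given by its mass functions:
    mu z eps v = mu_z^eps({v}).  It is a local random walk if:
    each mu_z^eps (eps in [0,1]) is a probability measure supported in a fixed
    finite set K_z (so first moments are automatically finite),
    eps |-> mu_z^eps is continuous on [0,1], and mu_z^0 = delta_z. *)
Definition local_random_walk {V : Type} (mu : V -> R -> V -> R) : Prop :=
  (exists K : V -> list V, forall z, NoDup (K z) /\
     forall eps, 0 <= eps <= 1 ->
       (forall v, 0 <= mu z eps v) /\
       (forall v, ~ In v (K z) -> mu z eps v = 0) /\
       fsum (K z) (mu z eps) = 1) /\
  (forall z v e0, 0 <= e0 <= 1 -> forall r, 0 < r -> exists del, 0 < del /\
     forall e, 0 <= e <= 1 -> Rabs (e - e0) < del ->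
       Rabs (mu z e v - mu z e0 v) < r) /\
  (forall z v, (v = z -> mu z 0 v = 1) /\ (v <> z -> mu z 0 v = 0)).

(** Every coupling of finitely supported measures is of
    this form. *)
Definition is_coupling {V : Type} (m n : V -> R) (pi : V -> V -> R) (L : list V)
  : Prop :=
  NoDup L /\
  (forall u v, 0 <= pi u v) /\
  (forall u v, ~ (In u L /\ In v L) -> pi u v = 0) /\
  (forall u, fsum L (fun v => pi u v) = m u) /\
  (forall v, fsum L (fun u => pi u v) = n v).

Definition W1 {V : Type} (d : V -> V -> R) (m n : V -> R) : R :=
  real (Glb_Rbar (fun c => exists (pi : V -> V -> R) (L : list V),
          is_coupling m n pi L /\
          c = fsum L (fun u => fsum L (fun v => pi u v * d u v)))).

Definition ORic {V : Type} (d : V -> V -> R) (mu : V -> R -> V -> R)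
  (x y : V) (eps : R) : R :=
  1 - W1 d (mu x eps) (mu y eps) / d x y.

Definition analytic_on (a b : R) (f : R -> R) : Prop :=
  forall x0, a < x0 < b -> exists r, 0 < r /\ exists c : nat -> R,
    forall x, Rabs (x - x0) < r -> is_pseries c (x - x0) (f x).

Definition is_affine (f : R -> R) : Prop :=
  exists a b, forall x, f x = a + b * x.

(* polynomial with coefficient list p = [p0; p1; ...], Horner evaluation *)
Definition poly_eval (p : list R) (x : R) : R :=
  fold_right (fun a acc => a + x * acc) 0 p.

Definition is_polynomial (f : R -> R) : Prop :=
  exists p : list R, forall x, f x = poly_eval p x.

Definition time_analytic {V : Type} (mu : V -> R -> V -> R) : Prop :=
  forall x y, exists del, 0 < del /\ exists g : R -> R,
    analytic_on (- del) (1 + del) g /\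
    forall eps, 0 <= eps <= 1 -> mu x eps y = g eps.

Definition time_affine {V : Type} (mu : V -> R -> V -> R) : Prop :=
  forall x y, exists g : R -> R, is_affine g /\
    forall eps, 0 <= eps <= 1 -> mu x eps y = g eps.

Definition time_polynomial {V : Type} (mu : V -> R -> V -> R) : Prop :=
  forall x y, exists g : R -> R, is_polynomial g /\
    forall eps, 0 <= eps <= 1 -> mu x eps y = g eps.

Definition locally_lipschitz_01 (f : R -> R) : Prop :=
  forall t, 0 < t < 1 -> exists r, 0 < r /\ exists K, 0 <= K /\
    forall s1 s2, 0 < s1 < 1 -> 0 < s2 < 1 ->
      Rabs (s1 - t) < r -> Rabs (s2 - t) < r ->
      Rabs (f s1 - f s2) <= K * Rabs (s1 - s2).

Definition piecewise (piece : R -> R -> (R -> R) -> Prop) (f : R -> R) : Prop :=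
  exists (n : nat) (t : nat -> R) (g : nat -> R -> R),
    t 0%nat = 0 /\ t n = 1 /\
    (forall i, (i < n)%nat -> t i < t (S i)) /\
    (forall i, (i < n)%nat ->
       piece (t i) (t (S i)) (g i) /\
       forall e, t i <= e <= t (S i) -> f e = g i e).

Definition analytic_piece (a b : R) (g : R -> R) : Prop :=
  exists eta, 0 < eta /\ analytic_on (a - eta) (b + eta) g.

Definition affine_piece (a b : R) (g : R -> R) : Prop := is_affine g.

Definition polynomial_piece (a b : R) (g : R -> R) : Prop := is_polynomial g.

(* Main.v *)
Require Import Defs.
From Stdlib Require Import Reals List.
From Coquelicot Require Import Coquelicot.
From Stdlib Require Import Lra Lia Permutation Classical ClassicalEpsilon FunctionalExtensionality.
Import ListNotations.
Open Scope R_scope.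

Definition dec (P : Prop) : bool := if excluded_middle_informative P then true else false.
Lemma decP (P : Prop) : dec P = true <-> P.
Proof. unfold dec; destruct (excluded_middle_informative P); split; intros; auto; discriminate. Qed.

Lemma fsum_nil {V} (f : V -> R) : fsum [] f = 0.
Proof. reflexivity. Qed.
Lemma fsum_cons {V} (a : V) L f : fsum (a :: L) f = f a + fsum L f.
Proof. reflexivity. Qed.
Lemma fsum_app {V} (L1 L2 : list V) f : fsum (L1 ++ L2) f = fsum L1 f + fsum L2 f.
Proof. induction L1; simpl; [lra|]. unfold fsum in *; simpl; rewrite IHL1; lra. Qed.
Lemma fsum_ext {V} (L : list V) f g : (forall x, In x L -> f x = g x) -> fsum L f = fsum L g.
Proof. induction L; intros H; simpl; auto. unfold fsum in *; simpl. rewrite H by (left; auto).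
  rewrite IHL; auto. intros; apply H; right; auto. Qed.
Lemma fsum_plus {V} (L : list V) f g : fsum L (fun x => f x + g x) = fsum L f + fsum L g.
Proof. induction L; [unfold fsum; simpl; lra|]. rewrite !fsum_cons, IHL; lra. Qed.
Lemma fsum_minus {V} (L : list V) f g : fsum L (fun x => f x - g x) = fsum L f - fsum L g.
Proof. induction L; [unfold fsum; simpl; lra|]. rewrite !fsum_cons, IHL; lra. Qed.
Lemma fsum_scal {V} (L : list V) c f : fsum L (fun x => c * f x) = c * fsum L f.
Proof. induction L; [unfold fsum; simpl; lra|]. rewrite !fsum_cons, IHL; lra. Qed.
Lemma fsum_scalr {V} (L : list V) c f : fsum L (fun x => f x * c) = fsum L f * c.
Proof. induction L; [unfold fsum; simpl; lra|]. rewrite !fsum_cons, IHL; lra. Qed.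
Lemma fsum_zero {V} (L : list V) f : (forall x, In x L -> f x = 0) -> fsum L f = 0.
Proof. intros H. transitivity (fsum L (fun _ => 0)). apply fsum_ext; auto.
  induction L; auto. rewrite fsum_cons, IHL; [lra|]. intros; apply H; right; auto. Qed.
Lemma fsum_le {V} (L : list V) f g : (forall x, In x L -> f x <= g x) -> fsum L f <= fsum L g.
Proof. induction L; intros H; [unfold fsum; simpl; lra|]. rewrite !fsum_cons.
  assert (f a <= g a) by (apply H; left; auto). assert (fsum L f <= fsum L g) by (apply IHL; intros; apply H; right; auto). lra. Qed.
Lemma fsum_nonneg {V} (L : list V) f : (forall x, In x L -> 0 <= f x) -> 0 <= fsum L f.
Proof. intros H. rewrite <- (fsum_zero L (fun _ => 0)) by auto. apply fsum_le; auto. Qed.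
Lemma fsum_swap {U V} (L1 : list U) (L2 : list V) F :
  fsum L1 (fun u => fsum L2 (fun v => F u v)) = fsum L2 (fun v => fsum L1 (fun u => F u v)).
Proof. induction L1.
  - rewrite fsum_nil. symmetry; apply fsum_zero; auto.
  - rewrite fsum_cons, IHL1. rewrite <- fsum_plus. apply fsum_ext; intros; rewrite fsum_cons; auto. Qed.
Lemma fsum_term_le {V} (L : list V) f a : (forall x, In x L -> 0 <= f x) -> In a L -> f a <= fsum L f.
Proof. induction L; intros H Ha; [destruct Ha|]. rewrite fsum_cons. destruct Ha as [<-|Ha].
  - assert (0 <= fsum L f) by (apply fsum_nonneg; intros; apply H; right; auto). lra.
  - assert (0 <= f a0) by (apply H; left; auto). assert (f a <= fsum L f) by (apply IHL; auto; intros; apply H; right; auto). lra. Qed.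
Lemma fsum_single {V} (L : list V) f a : NoDup L -> In a L -> (forall x, In x L -> x <> a -> f x = 0) -> fsum L f = f a.
Proof. induction L; intros ND Ha H; [destruct Ha|]. inversion ND; subst. rewrite fsum_cons.
  destruct Ha as [<-|Ha].
  - rewrite fsum_zero; [lra|]. intros x Hx. apply H; [right; auto|]. intros ->; auto.
  - rewrite (H a0); [| left; auto | intros ->; auto]. rewrite IHL; auto; [lra|]. intros; apply H; auto; right; auto. Qed.
Lemma fsum_perm {V} (L1 L2 : list V) f : Permutation L1 L2 -> fsum L1 f = fsum L2 f.
Proof. induction 1; auto.
  - rewrite !fsum_cons, IHPermutation; auto.
  - rewrite !fsum_cons; lra.
  - congruence. Qed.
Lemma fsum_filter {V} (L : list V) (P : V -> bool) f : (forall x, In x L -> P x = false -> f x = 0) -> fsum L f = fsum (filter P L) f.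
Proof. induction L; intros H; [reflexivity|]. cbn [filter]. destruct (P a) eqn:E.
  - rewrite !fsum_cons, IHL; auto. intros; apply H; auto; right; auto.
  - rewrite fsum_cons, H, IHL; [lra| |left; auto|auto]. intros; apply H; auto; right; auto. Qed.
Lemma fsum_transfer {V} (L1 L2 : list V) f : NoDup L1 -> NoDup L2 ->
  (forall x, f x <> 0 -> In x L1 /\ In x L2) -> fsum L1 f = fsum L2 f.
Proof. intros N1 N2 H.
  rewrite (fsum_filter L1 (fun x => dec (In x L2))), (fsum_filter L2 (fun x => dec (In x L1))).
  - apply fsum_perm. apply NoDup_Permutation; try apply NoDup_filter; auto.
    intros x; rewrite !filter_In, !decP; tauto.
  - intros x _ Hx. destruct (Req_dec (f x) 0); auto. exfalso. apply H in H0. destruct H0.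
    assert (dec (In x L1) = true) by (apply decP; auto). congruence.
  - intros x _ Hx. destruct (Req_dec (f x) 0); auto. exfalso. apply H in H0. destruct H0.
    assert (dec (In x L2) = true) by (apply decP; auto). congruence.
Qed.

Definition indv {V} (a : V) : V -> R := fun v => if excluded_middle_informative (v = a) then 1 else 0.
Lemma indv_eq {V} (a : V) : indv a a = 1.
Proof. unfold indv; destruct (excluded_middle_informative (a = a)); tauto. Qed.
Lemma indv_neq {V} (a v : V) : v <> a -> indv a v = 0.
Proof. unfold indv; destruct (excluded_middle_informative (v = a)); tauto. Qed.
Lemma fsum_indv {V} (L : list V) a f : NoDup L -> In a L -> fsum L (fun x => indv a x * f x) = f a.
Proof. intros. rewrite (fsum_single _ _ a); auto. rewrite indv_eq; lra.
  intros; rewrite indv_neq; auto; lra. Qed.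
Lemma fsum_indv' {V} (L : list V) a f : NoDup L -> In a L -> fsum L (fun x => f x * indv a x) = f a.
Proof. intros. rewrite (fsum_single _ _ a); auto. rewrite indv_eq; lra.
  intros; rewrite indv_neq; auto; lra. Qed.

Lemma list_argmin {A} (l : list A) (h : A -> R) : l <> [] -> exists a, In a l /\ forall b, In b l -> h a <= h b.
Proof. induction l; intros H; [congruence|]. destruct l as [|c l].
  - exists a; split; [left; auto|]. intros b [<-|[]]; lra.
  - destruct IHl as [m [Hm1 Hm2]]; [discriminate|]. destruct (Rle_dec (h a) (h m)).
    + exists a; split; [left; auto|]. intros b [<-|Hb]; [lra|]. specialize (Hm2 b Hb); lra.
    + exists m; split; [right; auto|]. intros b [<-|Hb]; [lra|]. auto. Qed.
Lemma fsum_indv1 {V} (L : list V) a : NoDup L -> In a L -> fsum L (indv a) = 1.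
Proof. intros. rewrite (fsum_ext _ _ (fun x => indv a x * 1)) by (intros; ring). rewrite fsum_indv; auto. Qed.

Lemma glb_finite (E : R -> Prop) c b : E c -> (forall x, E x -> b <= x) ->
  Glb_Rbar E = Finite (real (Glb_Rbar E)) /\ b <= real (Glb_Rbar E) <= c.
Proof. intros Ec Hb. destruct (Glb_Rbar_correct E) as [H1 H2].
  assert (Hl : Rbar_le (Glb_Rbar E) c) by (apply H1; auto).
  assert (Hu : Rbar_le b (Glb_Rbar E)) by (apply H2; intros x Ex; simpl; apply Hb; auto).
  destruct (Glb_Rbar E) as [l| |]; simpl in *; try contradiction; auto. Qed.
Lemma glb_le (E : R -> Prop) c b : E c -> (forall x, E x -> b <= x) -> real (Glb_Rbar E) <= c.
Proof. intros; apply (glb_finite E c b); auto. Qed.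
Lemma glb_ge (E : R -> Prop) b : (exists c, E c) -> (forall x, E x -> b <= x) -> b <= real (Glb_Rbar E).
Proof. intros [c Ec] H; apply (glb_finite E c b); auto. Qed.

Lemma fsum_nonneg_zero {V} (L : list V) f : (forall x, In x L -> 0 <= f x) -> fsum L f = 0 -> forall x, In x L -> f x = 0.
Proof. intros H H0 x Hx. pose proof (fsum_term_le L f x H Hx). specialize (H x Hx). lra. Qed.

Ltac vext1 := apply functional_extensionality; intro; try ring.

Section W.
Context {V : Type} (d : V -> V -> R) (Sv : list V).
Hypothesis Hd : is_distance d.
Hypothesis HN : NoDup Sv.

Lemma d_nonneg x y : 0 <= d x y. Proof. apply Hd. Qed.
Lemma d_refl x : d x x = 0. Proof. apply Hd; auto. Qed.
Lemma d_sym x y : d x y = d y x. Proof. apply Hd. Qed.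
Lemma d_tri x y z : d x z <= d x y + d y z. Proof. apply Hd. Qed.

Definition Lip (f : V -> R) := forall u v, In u Sv -> In v Sv -> f u - f v <= d u v.
Definition dot (f w : V -> R) := fsum Sv (fun u => f u * w u).
Definition out (F : V -> V -> R) u := fsum Sv (F u).
Definition inn (F : V -> V -> R) u := fsum Sv (fun v => F v u).
Definition flow (w : V -> R) F := (forall u v, 0 <= F u v) /\ forall u, In u Sv -> out F u - inn F u = w u.
Definition cost (F : V -> V -> R) := fsum Sv (fun u => fsum Sv (fun v => F u v * d u v)).
Definition FS w := fun c => exists F, flow w F /\ c = cost F.
Definition P w := real (Glb_Rbar (FS w)).
Definition zs (w : V -> R) := fsum Sv w = 0.

Lemma cost_nonneg F : (forall u v, 0 <= F u v) -> 0 <= cost F.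
Proof. intros H. apply fsum_nonneg; intros; apply fsum_nonneg; intros.
  apply Rmult_le_pos; auto; apply d_nonneg. Qed.

Lemma out_nonneg F u : (forall u v, 0 <= F u v) -> 0 <= out F u.
Proof. intros; apply fsum_nonneg; auto. Qed.

Lemma flow_exists w : zs w -> exists F, flow w F.
Proof. intros Hz.
  set (pos := fun x => Rmax x 0). set (neg := fun x => Rmax (-x) 0).
  assert (Hpn : forall x, pos x - neg x = x) by (intros; unfold pos, neg, Rmax; repeat destruct Rle_dec; lra).
  assert (Hp : forall x, 0 <= pos x) by (intros; unfold pos, Rmax; destruct Rle_dec; lra).
  assert (Hn : forall x, 0 <= neg x) by (intros; unfold neg, Rmax; destruct Rle_dec; lra).
  set (M := fsum Sv (fun u => pos (w u))).
  assert (HM : fsum Sv (fun u => neg (w u)) = M).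
  { unfold zs in Hz. rewrite <- (fsum_ext Sv (fun u => pos (w u) - neg (w u))) in Hz by (intros; auto).
    rewrite fsum_minus in Hz. unfold M; lra. }
  destruct (Req_dec M 0) as [M0|M0].
  - exists (fun _ _ => 0). split; [intros; lra|]. intros u Hu. unfold out, inn.
    rewrite !fsum_zero by auto.
    assert (pos (w u) = 0) by (apply (fsum_nonneg_zero Sv (fun u => pos (w u))); auto).
    assert (neg (w u) = 0) by (apply (fsum_nonneg_zero Sv (fun u => neg (w u))); auto; congruence).
    rewrite <- Hpn; lra.
  - assert (0 <= M) by (apply fsum_nonneg; auto).
    exists (fun u v => pos (w u) * neg (w v) / M). split.
    + intros; apply Rmult_le_pos; [apply Rmult_le_pos; auto|]. apply Rlt_le, Rinv_0_lt_compat; lra.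
    + intros u Hu. unfold out, inn. cbv beta.
      rewrite (fsum_ext _ (fun v => pos (w u) * neg (w v) / M) (fun v => (pos (w u) / M) * neg (w v))) by (intros; unfold Rdiv; ring).
      rewrite (fsum_ext _ (fun v => pos (w v) * neg (w u) / M) (fun v => (neg (w u) / M) * pos (w v))) by (intros; unfold Rdiv; ring).
      rewrite !fsum_scal, HM. fold M. transitivity (pos (w u) - neg (w u)); [field; auto | apply Hpn].
Qed.

Lemma P_le w F : flow w F -> P w <= cost F.
Proof. intros H. apply (glb_le _ _ 0). exists F; auto.
  intros x [G [HG ->]]. apply cost_nonneg, HG. Qed.
Lemma P_ge w b : zs w -> (forall F, flow w F -> b <= cost F) -> b <= P w.
Proof. intros Hz H. destruct (flow_exists w Hz) as [F HF]. apply glb_ge.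
  exists (cost F); exists F; auto. intros x [G [HG ->]]; auto. Qed.
Lemma P_nonneg w : zs w -> 0 <= P w.
Proof. intros; apply P_ge; auto. intros F HF; apply cost_nonneg, HF. Qed.

Lemma zs_plus w1 w2 : zs w1 -> zs w2 -> zs (fun u => w1 u + w2 u).
Proof. unfold zs; intros; rewrite fsum_plus; lra. Qed.
Lemma zs_scal t w : zs w -> zs (fun u => t * w u).
Proof. unfold zs; intros; rewrite fsum_scal; rewrite H; lra. Qed.

Lemma P_sub w1 w2 : zs w1 -> zs w2 -> P (fun u => w1 u + w2 u) <= P w1 + P w2.
Proof. intros H1 H2.
  assert (forall F1 F2, flow w1 F1 -> flow w2 F2 -> P (fun u => w1 u + w2 u) <= cost F1 + cost F2).
  { intros F1 F2 [A1 B1] [A2 B2].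
    assert (cost (fun a b => F1 a b + F2 a b) = cost F1 + cost F2).
    { unfold cost. rewrite <- fsum_plus. apply fsum_ext; intros. rewrite <- fsum_plus; apply fsum_ext; intros; ring. }
    rewrite <- H. apply P_le. split. intros; specialize (A1 u v); specialize (A2 u v); lra.
    intros u Hu. unfold out, inn in *. rewrite !fsum_plus. rewrite <- B1, <- B2; auto. lra. }
  assert (forall F2, flow w2 F2 -> P (fun u => w1 u + w2 u) - cost F2 <= P w1).
  { intros F2 HF2. apply P_ge; auto. intros F1 HF1. specialize (H F1 F2 HF1 HF2); lra. }
  assert (P (fun u => w1 u + w2 u) - P w1 <= P w2).
  { apply P_ge; auto. intros F2 HF2. specialize (H0 F2 HF2); lra. }
  lra. Qed.

Lemma flow_scal w F t : 0 <= t -> flow w F -> flow (fun u => t * w u) (fun a b => t * F a b).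
Proof. intros Ht [A B]. split. intros; apply Rmult_le_pos; auto.
  intros u Hu; unfold out, inn in *. rewrite !fsum_scal. rewrite <- B; auto; ring. Qed.
Lemma cost_scal F t : cost (fun a b => t * F a b) = t * cost F.
Proof. unfold cost. rewrite <- fsum_scal. apply fsum_ext; intros. rewrite <- fsum_scal. apply fsum_ext; intros; ring. Qed.

Lemma P_hom w t : zs w -> 0 <= t -> P (fun u => t * w u) = t * P w.
Proof. intros Hz Ht. destruct (Req_dec t 0) as [->|Ht0].
  - apply Rle_antisym.
    + rewrite Rmult_0_l. apply Rle_trans with (cost (fun _ _ => 0)).
      apply P_le. split; [intros; lra|]. intros u _. unfold out, inn; rewrite !fsum_zero; auto; lra.
      unfold cost; right; apply fsum_zero; intros; apply fsum_zero; intros; lra.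
    + rewrite Rmult_0_l. apply P_nonneg. apply zs_scal; auto.
  - assert (0 < t) by lra. apply Rle_antisym.
    + assert (HH : P (fun u => t * w u) / t <= P w).
      { apply P_ge; auto. intros F HF. apply (flow_scal _ _ t) in HF; auto. apply P_le in HF.
        rewrite cost_scal in HF. apply (Rmult_le_reg_l t); auto. field_simplify; lra. }
      assert (HE : P (fun u => t * w u) = t * (P (fun u => t * w u) / t)) by (field; lra).
      rewrite HE. apply Rmult_le_compat_l; lra.
    + apply P_ge. apply zs_scal; auto. intros G HG.
      apply (flow_scal _ _ (/ t)) in HG; [|apply Rlt_le, Rinv_0_lt_compat; auto].
      assert (Hw : (fun u => / t * (t * w u)) = w) by (vext1; field; auto).
      cbv beta in HG. rewrite Hw in HG. apply P_le in HG. rewrite cost_scal in HG.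
      apply (Rmult_le_reg_l (/ t)). apply Rinv_0_lt_compat; auto. rewrite <- Rmult_assoc, Rinv_l; lra.
Qed.

Lemma P_ind u v : In u Sv -> In v Sv -> P (fun x => indv u x - indv v x) <= d u v.
Proof. intros Hu Hv.
  assert (cost (fun a b => indv u a * indv v b) = d u v).
  { unfold cost. rewrite (fsum_ext _ _ (fun a => indv u a * fsum Sv (fun b => indv v b * d a b))).
    rewrite fsum_indv; auto. rewrite fsum_indv; auto.
    intros; rewrite <- fsum_scal; apply fsum_ext; intros; ring. }
  rewrite <- H. apply P_le. split.
  - intros; unfold indv; repeat destruct excluded_middle_informative; lra.
  - intros x Hx. unfold out, inn. rewrite fsum_scal, fsum_scalr, !fsum_indv1; auto; ring.
Qed.


Lemma indv_cases (a x : V) : (x = a /\ indv a x = 1) \/ (x <> a /\ indv a x = 0).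
Proof. unfold indv; destruct excluded_middle_informative; auto. Qed.

Lemma cost_mono F G : (forall a b, F a b <= G a b) -> cost F <= cost G.
Proof. intros H; unfold cost; apply fsum_le; intros; apply fsum_le; intros.
  apply Rmult_le_compat_r; auto; apply d_nonneg. Qed.

Definition splan (m n : V -> R) pi := (forall u v, 0 <= pi u v) /\
  (forall u, In u Sv -> out pi u = m u) /\ (forall v, In v Sv -> inn pi v = n v).

Lemma splan_ext m n m' n' pi : (forall x, In x Sv -> m x = m' x) -> (forall x, In x Sv -> n x = n' x) ->
  splan m n pi -> splan m' n' pi.
Proof. intros H1 H2 [A [B C]]; split; [|split]; auto.
  intros; rewrite <- H1; auto. intros; rewrite <- H2; auto. Qed.

Lemma step_red2 u0 beta m n pi : In u0 Sv -> 0 < beta ->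
  (forall x, In x Sv -> 0 <= m x) -> (forall x, In x Sv -> 0 <= n x) ->
  (forall a b, 0 <= pi a b) -> pi u0 u0 = 0 ->
  (forall a, In a Sv -> out pi a = m a + beta * indv u0 a) ->
  (forall b, In b Sv -> inn pi b = n b + beta * indv u0 b) ->
  exists pi', splan m n pi' /\ cost pi' <= cost pi.
Proof. intros Hu0 Hb Hm Hn Hp Hdiag Hrow Hcol.
  set (R0 := out pi u0). set (C0 := inn pi u0).
  assert (HR : R0 = m u0 + beta) by (unfold R0; rewrite Hrow, indv_eq; auto; ring).
  assert (HC : C0 = n u0 + beta) by (unfold C0; rewrite Hcol, indv_eq; auto; ring).
  assert (HR0 : beta <= R0) by (specialize (Hm u0 Hu0); lra).
  assert (HC0 : beta <= C0) by (specialize (Hn u0 Hu0); lra).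
  set (rho := fun b => beta * pi u0 b / R0). set (sig := fun a => beta * pi a u0 / C0).
  assert (Srho : fsum Sv rho = beta).
  { unfold rho. rewrite (fsum_ext _ _ (fun b => (beta / R0) * pi u0 b)) by (intros; unfold Rdiv; ring).
    rewrite fsum_scal. fold (out pi u0). fold R0. field; lra. }
  assert (Ssig : fsum Sv sig = beta).
  { unfold sig. rewrite (fsum_ext _ _ (fun a => (beta / C0) * pi a u0)) by (intros; unfold Rdiv; ring).
    rewrite fsum_scal. fold (inn pi u0). fold C0. field; lra. }
  assert (rho0 : rho u0 = 0) by (unfold rho; rewrite Hdiag; unfold Rdiv; ring).
  assert (sig0 : sig u0 = 0) by (unfold sig; rewrite Hdiag; unfold Rdiv; ring).
  assert (rhob : forall b, 0 <= rho b <= pi u0 b).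
  { intros b; unfold rho. specialize (Hp u0 b). split.
    apply Rmult_le_pos; [nra|]. apply Rlt_le, Rinv_0_lt_compat; lra.
    apply (Rmult_le_reg_l R0); [lra|]. field_simplify; [|lra]. nra. }
  assert (sigb : forall a, 0 <= sig a <= pi a u0).
  { intros a; unfold sig. specialize (Hp a u0). split.
    apply Rmult_le_pos; [nra|]. apply Rlt_le, Rinv_0_lt_compat; lra.
    apply (Rmult_le_reg_l C0); [lra|]. field_simplify; [|lra]. nra. }
  exists (fun a b => pi a b - indv u0 a * rho b - indv u0 b * sig a + sig a * rho b / beta).
  split; [split; [|split]|].
  - intros a b. destruct (indv_cases u0 a) as [[-> ->]|[Ha ->]];
    destruct (indv_cases u0 b) as [[-> ->]|[Hb' ->]].
    + rewrite Hdiag, sig0, rho0. unfold Rdiv; lra.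
    + rewrite sig0. specialize (rhob b). unfold Rdiv; lra.
    + rewrite rho0. specialize (sigb a). unfold Rdiv; lra.
    + specialize (rhob b); specialize (sigb a); specialize (Hp a b).
      assert (0 <= sig a * rho b / beta). { apply Rmult_le_pos; [nra|]. apply Rlt_le, Rinv_0_lt_compat; lra. }
      lra.
  - intros a Ha. unfold out. rewrite fsum_plus, !fsum_minus. fold (out pi a). rewrite Hrow by auto.
    rewrite fsum_scal, fsum_scalr, fsum_indv1 by auto.
    rewrite (fsum_ext _ (fun b => sig a * rho b / beta) (fun b => (sig a / beta) * rho b)) by (intros; unfold Rdiv; ring).
    rewrite fsum_scal, Srho. field. lra.
  - intros b Hb'. unfold inn. rewrite fsum_plus, !fsum_minus. fold (inn pi b). rewrite Hcol by auto.
    rewrite fsum_scalr, fsum_scal, fsum_indv1 by auto.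
    rewrite (fsum_ext _ (fun a => sig a * rho b / beta) (fun a => (rho b / beta) * sig a)) by (intros; unfold Rdiv; ring).
    rewrite fsum_scal, Ssig. field. lra.
  - set (A := fsum Sv (fun b => rho b * d u0 b)). set (B := fsum Sv (fun a => sig a * d a u0)).
    set (Cc := fsum Sv (fun a => fsum Sv (fun b => sig a * rho b / beta * d a b))).
    assert (Hc : cost (fun a b => pi a b - indv u0 a * rho b - indv u0 b * sig a + sig a * rho b / beta) = cost pi - A - B + Cc).
    { unfold cost, A, B, Cc.
      rewrite (fsum_ext _ _ (fun a => (fsum Sv (fun b => pi a b * d a b) - indv u0 a * fsum Sv (fun b => rho b * d a b)
          - sig a * d a u0) + fsum Sv (fun b => sig a * rho b / beta * d a b))).
      - rewrite fsum_plus, !fsum_minus. rewrite fsum_indv by auto. ring.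
      - intros a Ha. rewrite <- fsum_scal.
        rewrite (fsum_ext _ _ (fun b => ((pi a b * d a b - indv u0 a * (rho b * d a b)) - indv u0 b * (sig a * d a b))
           + sig a * rho b / beta * d a b)) by (intros; ring).
        rewrite fsum_plus, !fsum_minus, fsum_indv by auto. auto. }
    assert (Hle : Cc <= A + B).
    { unfold Cc. apply Rle_trans with (fsum Sv (fun a => fsum Sv (fun b => sig a * rho b / beta * (d a u0 + d u0 b)))).
      - apply fsum_le; intros a _; apply fsum_le; intros b _. apply Rmult_le_compat_l; [|apply d_tri].
        specialize (rhob b); specialize (sigb a).
        apply Rmult_le_pos; [nra|]. apply Rlt_le, Rinv_0_lt_compat; lra.
      - right. rewrite (fsum_ext _ _ (fun a => (sig a * d a u0 / beta) * fsum Sv rho + (sig a / beta) * A)).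
        + rewrite fsum_plus, fsum_scalr, fsum_scalr, Srho.
          rewrite (fsum_ext _ (fun a => sig a / beta) (fun a => / beta * sig a)) by (intros; unfold Rdiv; ring).
          rewrite fsum_scal, Ssig. unfold B. rewrite (fsum_ext _ (fun a => sig a * d a u0 / beta) (fun a => / beta * (sig a * d a u0))) by (intros; unfold Rdiv; ring).
          rewrite fsum_scal. field; lra.
        + intros a _. unfold A. rewrite <- fsum_scal, <- fsum_scal, <- fsum_plus. apply fsum_ext; intros; unfold Rdiv; ring. }
    rewrite Hc. assert (0 <= A) by (apply fsum_nonneg; intros; apply Rmult_le_pos; [apply rhob|apply d_nonneg]).
    assert (0 <= B) by (apply fsum_nonneg; intros; apply Rmult_le_pos; [apply sigb|apply d_nonneg]). lra.
Qed.

Lemma step_red u0 alpha m n pi : In u0 Sv -> 0 <= alpha ->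
  (forall x, In x Sv -> 0 <= m x) -> (forall x, In x Sv -> 0 <= n x) ->
  splan (fun x => m x + alpha * indv u0 x) (fun x => n x + alpha * indv u0 x) pi ->
  exists pi', splan m n pi' /\ cost pi' <= cost pi.
Proof. intros Hu0 Ha Hm Hn [Hp [Hr Hc]].
  destruct (Rle_dec alpha (pi u0 u0)) as [Hle|Hlt].
  - exists (fun a b => pi a b - alpha * (indv u0 a * indv u0 b)). split; [split; [|split]|].
    + intros a b. specialize (Hp a b). destruct (indv_cases u0 a) as [[-> ->]|[? ->]];
      destruct (indv_cases u0 b) as [[-> ->]|[? ->]]; try lra.
    + intros a Ha'. unfold out. rewrite fsum_minus. fold (out pi a). rewrite Hr by auto.
      rewrite (fsum_ext _ (fun b => alpha * (indv u0 a * indv u0 b)) (fun b => (alpha * indv u0 a) * indv u0 b)) by (intros; ring).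
      rewrite fsum_scal, fsum_indv1 by auto. ring.
    + intros b Hb. unfold inn. rewrite fsum_minus. fold (inn pi b). rewrite Hc by auto.
      rewrite (fsum_ext _ (fun a => alpha * (indv u0 a * indv u0 b)) (fun a => (alpha * indv u0 b) * indv u0 a)) by (intros; ring).
      rewrite fsum_scal, fsum_indv1 by auto. ring.
    + apply cost_mono. intros a b. destruct (indv_cases u0 a) as [[-> ->]|[? ->]];
      destruct (indv_cases u0 b) as [[-> ->]|[? ->]]; lra.
  - set (pi1 := fun a b => pi a b - pi u0 u0 * (indv u0 a * indv u0 b)).
    destruct (step_red2 u0 (alpha - pi u0 u0) m n pi1) as [pi' [H1 H2]]; auto; try lra.
    + intros a b. unfold pi1. specialize (Hp a b). destruct (indv_cases u0 a) as [[-> ->]|[? ->]];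
      destruct (indv_cases u0 b) as [[-> ->]|[? ->]]; try lra.
    + unfold pi1; rewrite indv_eq; ring.
    + intros a Ha'. unfold out, pi1. rewrite fsum_minus. fold (out pi a). rewrite Hr by auto.
      rewrite (fsum_ext _ (fun b => pi u0 u0 * (indv u0 a * indv u0 b)) (fun b => (pi u0 u0 * indv u0 a) * indv u0 b)) by (intros; ring).
      rewrite fsum_scal, fsum_indv1 by auto. ring.
    + intros b Hb. unfold inn, pi1. rewrite fsum_minus. fold (inn pi b). rewrite Hc by auto.
      rewrite (fsum_ext _ (fun a => pi u0 u0 * (indv u0 a * indv u0 b)) (fun a => (pi u0 u0 * indv u0 b) * indv u0 a)) by (intros; ring).
      rewrite fsum_scal, fsum_indv1 by auto. ring.
    + exists pi'; split; auto. apply Rle_trans with (cost pi1); auto.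
      apply cost_mono. intros a b; unfold pi1. specialize (Hp u0 u0).
      destruct (indv_cases u0 a) as [[-> ->]|[? ->]];
      destruct (indv_cases u0 b) as [[-> ->]|[? ->]]; lra.
Qed.

Lemma red_multi L : NoDup L -> incl L Sv -> forall m n a pi,
  (forall x, In x Sv -> 0 <= m x) -> (forall x, In x Sv -> 0 <= n x) -> (forall x, 0 <= a x) ->
  (forall x, In x Sv -> ~ In x L -> a x = 0) ->
  splan (fun x => m x + a x) (fun x => n x + a x) pi -> exists pi', splan m n pi' /\ cost pi' <= cost pi.
Proof. induction L as [|h L IH]; intros ND Hinc m n a pi Hm Hn Ha Hsupp Hpl.
  - exists pi; split; [|lra]. revert Hpl; apply splan_ext; intros x Hx; rewrite Hsupp; auto; ring.
  - inversion ND; subst. set (a' := fun x => a x - a h * indv h x).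
    assert (Ha' : forall x, 0 <= a' x).
    { intros x; unfold a'. destruct (indv_cases h x) as [[-> ->]|[? ->]]; [lra|]. specialize (Ha x); lra. }
    destruct (step_red h (a h) (fun x => m x + a' x) (fun x => n x + a' x) pi) as [pi1 [K1 K2]]; auto.
    + apply Hinc; left; auto.
    + intros x Hx; specialize (Hm x Hx); specialize (Ha' x); lra.
    + intros x Hx; specialize (Hn x Hx); specialize (Ha' x); lra.
    + revert Hpl; apply splan_ext; intros; unfold a'; ring.
    + destruct (IH H2 (fun x Hx => Hinc x (or_intror Hx)) m n a' pi1) as [pi2 [H3 H4]]; auto.
      * intros x Hx HL. unfold a'. destruct (indv_cases h x) as [[-> ->]|[Hxh ->]]; [ring|].
        rewrite Hsupp; auto; [ring|]. intros [->|?]; tauto.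
      * exists pi2; split; auto; lra.
Qed.

Lemma flow_to_coupling m n F : (forall x, 0 <= m x) -> (forall x, 0 <= n x) ->
  (forall x, ~ In x Sv -> m x = 0) -> (forall x, ~ In x Sv -> n x = 0) ->
  flow (fun x => m x - n x) F ->
  exists pi, is_coupling m n pi Sv /\ fsum Sv (fun u => fsum Sv (fun v => pi u v * d u v)) <= cost F.
Proof. intros Hm Hn Sm Sn [HF HFl].
  set (pi0 := fun a b => F a b + indv a b * m a).
  assert (Hp0 : splan (fun x => m x + out F x) (fun x => n x + out F x) pi0).
  { split; [|split].
    - intros a b; unfold pi0. specialize (HF a b); specialize (Hm a).
      destruct (indv_cases a b) as [[? ->]|[? ->]]; lra.
    - intros a Ha. unfold out at 1, pi0. rewrite fsum_plus. fold (out F a). rewrite fsum_scalr, fsum_indv1; auto; ring.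
    - intros b Hb. unfold inn, pi0. rewrite fsum_plus. fold (inn F b).
      rewrite (fsum_single _ _ b); auto. rewrite indv_eq. specialize (HFl b Hb). lra.
      intros x _ Hx. rewrite indv_neq; [ring|]. auto. }
  destruct (red_multi Sv HN (fun x H => H) m n (out F) pi0) as [pi' [[A [B C]] H2]]; auto.
  - intros; apply out_nonneg; auto.
  - intros x Hx Hx'; tauto.
  - exists (fun a b => if excluded_middle_informative (In a Sv /\ In b Sv) then pi' a b else 0).
    split.
    + split; [auto|split; [|split; [|split]]].
      * intros u v; destruct excluded_middle_informative; auto; lra.
      * intros u v H; destruct excluded_middle_informative; tauto.
      * intros u. destruct (classic (In u Sv)) as [Hu|Hu].
        -- rewrite <- B by auto. apply fsum_ext; intros. destruct excluded_middle_informative; tauto.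
        -- rewrite Sm by auto. apply fsum_zero; intros; destruct excluded_middle_informative; tauto.
      * intros v. destruct (classic (In v Sv)) as [Hv|Hv].
        -- rewrite <- C by auto. apply fsum_ext; intros. destruct excluded_middle_informative; tauto.
        -- rewrite Sn by auto. apply fsum_zero; intros; destruct excluded_middle_informative; tauto.
    + apply Rle_trans with (cost pi').
      * right. unfold cost. apply fsum_ext; intros; apply fsum_ext; intros. destruct excluded_middle_informative; tauto.
      * apply Rle_trans with (cost pi0); auto. right. unfold cost, pi0.
        apply fsum_ext; intros a Ha.
        rewrite (fsum_ext _ _ (fun b => F a b * d a b + indv a b * (m a * d a b))) by (intros; ring).
        rewrite fsum_plus, fsum_indv by auto. rewrite d_refl. ring.
Qed.

Definition W1set (m n : V -> R) := fun c => exists (pi : V -> V -> R) (L : list V),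
  is_coupling m n pi L /\ c = fsum L (fun u => fsum L (fun v => pi u v * d u v)).

Lemma W1set_nonneg m n c : W1set m n c -> 0 <= c.
Proof. intros [pi [L [[_ [Hp _]] ->]]]. apply fsum_nonneg; intros; apply fsum_nonneg; intros.
  apply Rmult_le_pos; auto; apply d_nonneg. Qed.

Lemma W1_le_P m n : (forall x, 0 <= m x) -> (forall x, 0 <= n x) ->
  (forall x, ~ In x Sv -> m x = 0) -> (forall x, ~ In x Sv -> n x = 0) ->
  zs (fun x => m x - n x) -> W1 d m n <= P (fun x => m x - n x) /\ exists c, W1set m n c.
Proof. intros Hm Hn Sm Sn Hz.
  destruct (flow_exists _ Hz) as [F0 HF0].
  destruct (flow_to_coupling m n F0) as [pi0 [Hc0 _]]; auto.
  split; [|eexists; exists pi0, Sv; split; eauto].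
  apply P_ge; auto. intros F HF. destruct (flow_to_coupling m n F) as [pi [Hc Hle]]; auto.
  apply Rle_trans with (fsum Sv (fun u => fsum Sv (fun v => pi u v * d u v))); auto.
  unfold W1. apply (glb_le _ _ 0). exists pi, Sv; split; auto.
  apply W1set_nonneg. Qed.

Lemma weak_dual m n g pi L : (forall x, 0 <= m x) -> (forall x, 0 <= n x) ->
  (forall x, ~ In x Sv -> m x = 0) -> (forall x, ~ In x Sv -> n x = 0) -> Lip g ->
  is_coupling m n pi L -> dot g (fun x => m x - n x) <= fsum L (fun u => fsum L (fun v => pi u v * d u v)).
Proof. intros Hm Hn Sm Sn Hg [NL [Hp [Hs [Hr Hc]]]].
  assert (Hrow0 : forall u, ~ In u L -> m u = 0).
  { intros u Hu. rewrite <- Hr. apply fsum_zero; intros; apply Hs; tauto. }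
  assert (Hcol0 : forall v, ~ In v L -> n v = 0).
  { intros v Hv. rewrite <- Hc. apply fsum_zero; intros; apply Hs; tauto. }
  apply Rle_trans with (fsum L (fun u => fsum L (fun v => pi u v * (g u - g v)))).
  - right. rewrite (fsum_ext _ _ (fun u => g u * m u - fsum L (fun v => pi u v * g v))).
    + rewrite fsum_minus. rewrite fsum_swap.
      rewrite (fsum_ext L (fun v => fsum L (fun u => pi u v * g v)) (fun v => g v * n v)).
      * unfold dot. rewrite (fsum_ext _ _ (fun u => g u * m u - g u * n u)) by (intros; ring).
        rewrite fsum_minus. f_equal; apply fsum_transfer; auto; intros x Hx.
        -- split. destruct (classic (In x Sv)); auto. rewrite Sm in Hx; auto; lra.
           destruct (classic (In x L)); auto. rewrite Hrow0 in Hx; auto; lra.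
        -- split. destruct (classic (In x Sv)); auto. rewrite Sn in Hx; auto; lra.
           destruct (classic (In x L)); auto. rewrite Hcol0 in Hx; auto; lra.
      * intros v _. rewrite fsum_scalr, Hc; ring.
    + intros u _. rewrite <- Hr, <- fsum_scal, <- fsum_minus. apply fsum_ext; intros; ring.
  - apply fsum_le; intros u Hu; apply fsum_le; intros v Hv.
    destruct (Req_dec (pi u v) 0) as [E|E].
    + rewrite E; lra.
    + apply Rmult_le_compat_l; auto. apply Hg.
      * destruct (classic (In u Sv)) as [?|Hu']; auto. exfalso.
        assert (pi u v <= fsum L (fun v => pi u v)) by (apply (fsum_term_le L (fun v => pi u v)); auto).
        rewrite Hr, Sm in H by auto. specialize (Hp u v). lra.
      * destruct (classic (In v Sv)) as [?|Hv']; auto. exfalso.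
        assert (pi u v <= fsum L (fun u => pi u v)) by (apply (fsum_term_le L (fun u => pi u v)); auto).
        rewrite Hc, Sn in H by auto. specialize (Hp u v). lra.
Qed.
End W.

Definition vadd {V} (x y : V -> R) := fun v => x v + y v.
Definition vscal {V} (t : R) (x : V -> R) := fun v => t * x v.
Definition vzero {V} : V -> R := fun _ => 0.
Ltac vext := apply functional_extensionality; intro; unfold vadd, vscal, vzero; try ring.

Section HB.
Context {V : Type} (D : (V -> R) -> Prop) (p : (V -> R) -> R).
Hypothesis HD0 : D vzero.
Hypothesis HDadd : forall x y, D x -> D y -> D (vadd x y).
Hypothesis HDscal : forall t x, D x -> D (vscal t x).
Hypothesis Hpsub : forall x y, D x -> D y -> p (vadd x y) <= p x + p y.
Hypothesis Hphom : forall t x, 0 <= t -> D x -> p (vscal t x) = t * p x.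

Definition subsp (U : (V -> R) -> Prop) := (forall x, U x -> D x) /\ U vzero /\
  (forall x y, U x -> U y -> U (vadd x y)) /\ (forall t x, U x -> U (vscal t x)).
Definition linU (U : (V -> R) -> Prop) phi := forall x y a b, U x -> U y ->
  phi (vadd (vscal a x) (vscal b y)) = a * phi x + b * phi y.
Definition domU (U : (V -> R) -> Prop) phi := forall x, U x -> phi x <= p x.
Definition ext (U : (V -> R) -> Prop) e := fun y => exists u t, U u /\ y = vadd u (vscal t e).

Lemma p0 : p vzero = 0.
Proof. replace (@vzero V) with (vscal 0 (@vzero V)) by vext. rewrite Hphom; auto; lra. Qed.

Lemma lin_add U phi x y : linU U phi -> U x -> U y -> phi (vadd x y) = phi x + phi y.
Proof. intros H Hx Hy. replace (vadd x y) with (vadd (vscal 1 x) (vscal 1 y)) by vext. rewrite H; auto; ring. Qed.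
Lemma lin_scal U phi a x : linU U phi -> U x -> phi (vscal a x) = a * phi x.
Proof. intros H Hx. replace (vscal a x) with (vadd (vscal a x) (vscal 0 x)) by vext. rewrite H; auto; ring. Qed.
Lemma lin_zero U phi : linU U phi -> U vzero -> phi vzero = 0.
Proof. intros H H0. replace (@vzero V) with (vscal 0 (@vzero V)) by vext. rewrite (lin_scal U); auto; ring. Qed.

Lemma ext_subsp U e : subsp U -> D e -> subsp (ext U e).
Proof. intros [H1 [H2 [H3 H4]]] De. split; [|split; [|split]].
  - intros y [u [t [Hu ->]]]. apply HDadd; auto.
  - exists vzero, 0; split; auto. vext.
  - intros x y [u1 [t1 [Hu1 ->]]] [u2 [t2 [Hu2 ->]]]. exists (vadd u1 u2), (t1 + t2); split; auto. vext.
  - intros s x [u [t [Hu ->]]]. exists (vscal s u), (s * t); split; auto. vext.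
Qed.

Lemma ext_unique U e u1 u2 t1 t2 : subsp U -> ~ U e -> U u1 -> U u2 ->
  vadd u1 (vscal t1 e) = vadd u2 (vscal t2 e) -> u1 = u2 /\ t1 = t2.
Proof. intros [H1 [H2 [H3 H4]]] Ne Hu1 Hu2 Heq.
  assert (Hp : forall v, u1 v + t1 * e v = u2 v + t2 * e v).
  { intros v. apply (f_equal (fun f => f v)) in Heq. exact Heq. }
  destruct (Req_dec t1 t2) as [<-|Ht].
  - split; auto. apply functional_extensionality; intros v; specialize (Hp v); lra.
  - exfalso. apply Ne.
    replace e with (vscal (/ (t1 - t2)) (vadd u2 (vscal (-1) u1))). apply H4, H3; auto.
    apply functional_extensionality; intros v; unfold vscal, vadd. specialize (Hp v).
    field_simplify; [|lra]. assert (u2 v - u1 v = (t1 - t2) * e v) by lra. rewrite H.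
    field. lra.
Qed.

Lemma hb_step U phi e c : subsp U -> linU U phi -> domU U phi -> D e ->
  (forall u, U u -> phi u - p (vadd u (vscal (-1) e)) <= c) ->
  (forall v, U v -> c <= p (vadd v e) - phi v) ->
  exists phi', linU (ext U e) phi' /\ domU (ext U e) phi' /\
    forall u t, U u -> phi' (vadd u (vscal t e)) = phi u + t * c.
Proof. intros HU Hl Hdm De Hlo Hup. pose proof HU as [U1 [U2 [U3 U4]]].
  destruct (classic (U e)) as [Ue|Ne].
  - assert (Hc : c = phi e).
    { apply Rle_antisym.
      + specialize (Hup (vscal (-1) e) (U4 _ _ Ue)).
        replace (vadd (vscal (-1) e) e) with (@vzero V) in Hup by vext.
        rewrite p0, (lin_scal U) in Hup; auto. lra.
      + specialize (Hlo e Ue). replace (vadd e (vscal (-1) e)) with (@vzero V) in Hlo by vext.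
        rewrite p0 in Hlo; lra. }
    assert (Hsub : forall y, ext U e y -> U y).
    { intros y [u [t [Hu ->]]]. apply U3; auto. }
    exists phi. split; [|split].
    + intros x y a b Hx Hy; apply Hl; auto.
    + intros x Hx; apply Hdm; auto.
    + intros u t Hu. rewrite (lin_add U), (lin_scal U); auto. rewrite Hc; ring.
  - set (phi' := fun y => match excluded_middle_informative
         (exists ut : (V -> R) * R, U (fst ut) /\ y = vadd (fst ut) (vscal (snd ut) e)) with
         | left H => let ut := proj1_sig (constructive_indefinite_description _ H) in phi (fst ut) + snd ut * c
         | right _ => 0 end).
    assert (Key : forall u t, U u -> phi' (vadd u (vscal t e)) = phi u + t * c).
    { intros u t Hu. unfold phi'. destruct excluded_middle_informative as [H|H].
      - destruct (constructive_indefinite_description _ H) as [[u' t'] [Hu' Heq]]; simpl in *.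
        destruct (ext_unique U e u u' t t') as [-> ->]; auto.
      - exfalso; apply H. exists (u, t); auto. }
    exists phi'. split; [|split]; auto.
    + intros x y a b [u1 [t1 [Hu1 ->]]] [u2 [t2 [Hu2 ->]]].
      replace (vadd (vscal a (vadd u1 (vscal t1 e))) (vscal b (vadd u2 (vscal t2 e))))
        with (vadd (vadd (vscal a u1) (vscal b u2)) (vscal (a * t1 + b * t2) e)) by vext.
      rewrite !Key; auto. rewrite (lin_add U), !(lin_scal U); auto. ring.
    + intros y [u [t [Hu ->]]]. rewrite Key; auto.
      destruct (Rtotal_order t 0) as [Ht|[Ht|Ht]].
      * set (s := - t). assert (Hs : 0 < s) by (unfold s; lra).
        set (u' := vscal (/ s) u). assert (Hu' : U u') by (apply U4; auto).
        specialize (Hlo u' Hu').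
        replace (vadd u (vscal t e)) with (vscal s (vadd u' (vscal (-1) e))) by
          (unfold u', s; apply functional_extensionality; intro; unfold vadd, vscal; field; lra).
        rewrite Hphom; [|lra|apply HDadd; auto].
        replace (phi u) with (s * phi u') by (unfold u'; rewrite (lin_scal U); auto; field; lra).
        replace t with (- s) by (unfold s; ring). nra.
      * subst t. replace (vadd u (vscal 0 e)) with u by vext. specialize (Hdm u Hu); lra.
      * set (u' := vscal (/ t) u). assert (Hu' : U u') by (apply U4; auto).
        specialize (Hup u' Hu').
        replace (vadd u (vscal t e)) with (vscal t (vadd u' e)) by
          (unfold u'; apply functional_extensionality; intro; unfold vadd, vscal; field; lra).
        rewrite Hphom; [|lra|apply HDadd; auto].
        replace (phi u) with (t * phi u') by (unfold u'; rewrite (lin_scal U); auto; field; lra).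
        nra.
Qed.

Lemma hb_c U phi e : subsp U -> linU U phi -> domU U phi -> D e ->
  exists c, (forall u, U u -> phi u - p (vadd u (vscal (-1) e)) <= c) /\
    (forall v, U v -> c <= p (vadd v e) - phi v).
Proof. intros HU Hl Hdm De. pose proof HU as [U1 [U2 [U3 U4]]].
  set (A := fun r => exists u, U u /\ r = phi u - p (vadd u (vscal (-1) e))).
  assert (Hab : forall u v, U u -> U v -> phi u - p (vadd u (vscal (-1) e)) <= p (vadd v e) - phi v).
  { intros u v Hu Hv. assert (phi u + phi v <= p (vadd u (vscal (-1) e)) + p (vadd v e)).
    { rewrite <- (lin_add U); auto. apply Rle_trans with (p (vadd u v)). apply Hdm; auto.
      replace (vadd u v) with (vadd (vadd u (vscal (-1) e)) (vadd v e)) by vext.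
      apply Hpsub; apply HDadd; auto. }
    lra. }
  destruct (completeness A) as [c [Hc1 Hc2]].
  - exists (p (vadd vzero e) - phi vzero). intros r [u [Hu ->]]. apply Hab; auto.
  - exists (phi vzero - p (vadd vzero (vscal (-1) e))); exists vzero; auto.
  - exists c; split.
    + intros u Hu; apply Hc1; exists u; auto.
    + intros v Hv; apply Hc2. intros r [u [Hu ->]]; apply Hab; auto.
Qed.

Lemma hb_list (Lv : list (V -> R)) : (forall e, In e Lv -> D e) -> forall U phi,
  subsp U -> linU U phi -> domU U phi ->
  exists U' phi', subsp U' /\ (forall x, U x -> U' x) /\ (forall e, In e Lv -> U' e) /\
    linU U' phi' /\ domU U' phi' /\ forall x, U x -> phi' x = phi x.
Proof. induction Lv as [|e Lv IH]; intros HL U phi HU Hl Hdm.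
  - exists U, phi; split; [auto|split; [auto|split; [intros e []|split; [auto|split; auto]]]].
  - assert (De : D e) by (apply HL; left; auto).
    destruct (hb_c U phi e) as [c [Hc1 Hc2]]; auto.
    destruct (hb_step U phi e c) as [phi1 [Hl1 [Hd1 Hk1]]]; auto.
    assert (HU1 : subsp (ext U e)) by (apply ext_subsp; auto).
    destruct (IH (fun e H => HL e (or_intror H)) (ext U e) phi1) as [U' [phi' [A1 [A2 [A3 [A4 [A5 A6]]]]]]]; auto.
    exists U', phi'. split; [|split; [|split; [|split; [|split]]]]; auto.
    + intros x Hx. apply A2. exists x, 0; split; auto. vext.
    + intros e' [<-|He]; auto. apply A2. exists vzero, 1. split; [apply HU|]. vext.
    + intros x Hx. rewrite A6. replace x with (vadd x (vscal 0 e)) at 1 by vext. rewrite Hk1; auto; ring.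
      exists x, 0; split; auto; vext.
Qed.

Definition vsumL (L : list V) (x : V -> R) := fun v => fsum L (fun u => x u * indv u v).

Lemma hb_final (Sv : list V) : NoDup Sv -> (forall x, D x -> forall v, ~ In v Sv -> x v = 0) ->
  (forall u, In u Sv -> D (indv u)) -> forall x0, D x0 ->
  exists c : V -> R, (forall x, D x -> fsum Sv (fun u => c u * x u) <= p x) /\ fsum Sv (fun u => c u * x0 u) = p x0.
Proof. intros HN Hsupp Hind x0 Dx0.
  set (U0 := fun y : V -> R => y = vzero).
  assert (HU0 : subsp U0).
  { split; [|split; [|split]]; unfold U0.
    - intros x ->; auto.
    - auto.
    - intros x y -> ->; vext.
    - intros t x ->; vext. }
  assert (Hl0 : linU U0 (fun _ => 0)) by (intros x y a b _ _; ring).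
  assert (Hd0 : domU U0 (fun _ => 0)) by (intros x ->; rewrite p0; lra).
  destruct (hb_step U0 (fun _ => 0) x0 (p x0)) as [phi1 [Hl1 [Hd1 Hk1]]]; auto.
  { intros u ->.
    replace (vadd vzero (vscal (-1) x0)) with (vscal (-1) x0) by vext.
    assert (p (vadd x0 (vscal (-1) x0)) <= p x0 + p (vscal (-1) x0)) by (apply Hpsub; auto).
    replace (vadd x0 (vscal (-1) x0)) with (@vzero V) in H by vext. rewrite p0 in H. lra. }
  { intros v ->. replace (vadd vzero x0) with x0 by vext. lra. }
  assert (HU1 : subsp (ext U0 x0)) by (apply ext_subsp; auto).
  destruct (hb_list (map indv Sv)) with (U := ext U0 x0) (phi := phi1) as [U2 [phi2 [A1 [A2 [A3 [A4 [A5 A6]]]]]]]; auto.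
  { intros e He. apply in_map_iff in He as [u [<- Hu]]. auto. }
  assert (Hx0 : phi2 x0 = p x0).
  { rewrite A6. replace x0 with (vadd vzero (vscal 1 x0)) at 1 by vext. rewrite Hk1; [ring|reflexivity].
    exists vzero, 1; split; [reflexivity|vext]. }
  assert (Hind2 : forall u, In u Sv -> U2 (indv u)) by (intros; apply A3; apply in_map; auto).
  pose proof A1 as [B1 [B2 [B3 B4]]].
  assert (Hsum : forall L x, incl L Sv -> U2 (vsumL L x) /\ phi2 (vsumL L x) = fsum L (fun u => phi2 (indv u) * x u)).
  { induction L as [|a L IH]; intros x Hinc.
    - replace (vsumL [] x) with (@vzero V) by (unfold vsumL; vext; reflexivity). split; [auto|].
      rewrite (lin_zero U2); auto.
    - replace (vsumL (a :: L) x) with (vadd (vscal (x a) (indv a)) (vsumL L x)) by (unfold vsumL; vext; rewrite fsum_cons; ring).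
      destruct (IH x (fun y H => Hinc y (or_intror H))) as [IH1 IH2].
      assert (Ha : In a Sv) by (apply Hinc; left; auto).
      split. apply B3; auto. rewrite (lin_add U2), (lin_scal U2), IH2, fsum_cons; auto; ring. }
  assert (Hrep : forall x, D x -> x = vsumL Sv x).
  { intros x Dx. apply functional_extensionality; intros v. unfold vsumL.
    destruct (classic (In v Sv)) as [Hv|Hv].
    - rewrite (fsum_single _ _ v); auto. rewrite indv_eq; ring.
      intros u _ Hu; rewrite indv_neq; [ring|]; auto.
    - rewrite Hsupp; auto. symmetry; apply fsum_zero; intros u Hu. rewrite indv_neq; [ring|].
      intros ->; auto. }
  exists (fun u => phi2 (indv u)). split.
  - intros x Dx. destruct (Hsum Sv x (fun y H => H)) as [H1 H2].
    rewrite <- (Hrep x Dx) in H1, H2. rewrite <- H2. apply A5; auto.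
  - rewrite <- Hx0. destruct (Hsum Sv x0 (fun y H => H)) as [H1 H2].
    rewrite <- (Hrep x0 Dx0) in H1, H2. auto.
Qed.
End HB.

Section Push.
Context {V : Type} (d : V -> V -> R) (Sv : list V).
Hypothesis Hd : is_distance d.
Hypothesis HN : NoDup Sv.

Fixpoint sigl (k : nat) : list R := match k with
  | O => [0]
  | S k => sigl k ++ flat_map (fun s => flat_map (fun a => flat_map (fun b => [s + d a b; s - d a b]) Sv) Sv) (sigl k)
  end.
Lemma sigl_mono k s : In s (sigl k) -> In s (sigl (S k)).
Proof. intros; simpl; apply in_or_app; left; auto. Qed.
Lemma sigl_plus k s a b : In s (sigl k) -> In a Sv -> In b Sv ->
  In (s + d a b) (sigl (S k)) /\ In (s - d a b) (sigl (S k)).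
Proof. intros Hs Ha Hb; simpl; split; apply in_or_app; right; apply in_flat_map; exists s; split; auto;
  apply in_flat_map; exists a; split; auto; apply in_flat_map; exists b; split; auto; simpl; auto. Qed.

Variables (f w : V -> R).
Definition Inv k g := exists T, NoDup T /\ incl T Sv /\ length T = S k /\
  (forall u, In u T -> In (g u) (sigl k)) /\ Lip d Sv g /\ dot Sv f w <= dot Sv g w.

Lemma push_step k g : Inv k g -> (S k < length Sv)%nat -> exists g', Inv (S k) g'.
Proof. intros [T [NT [IT [LT [VT [LG OG]]]]]] Hlen.
  assert (Hex : exists u, In u Sv /\ ~ In u T).
  { destruct (classic (exists u, In u Sv /\ ~ In u T)) as [?|Hn]; auto. exfalso.
    assert (incl Sv T). { intros u Hu. destruct (classic (In u T)); auto. exfalso; apply Hn; eauto. }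
    pose proof (NoDup_incl_length HN H). lia. }
  destruct Hex as [u0 [Hu0 Hu0']].
  destruct T as [|t0 T']; [simpl in LT; lia|].
  set (T := t0 :: T') in *.
  set (WC := fsum Sv (fun u => if excluded_middle_informative (In u T) then 0 else w u)).
  set (s := if Rle_dec 0 WC then 1 else -1).
  assert (Hs : s = 1 \/ s = -1) by (unfold s; destruct Rle_dec; auto).
  assert (HsW : 0 <= s * WC) by (unfold s; destruct Rle_dec; lra).
  set (pairs := list_prod (filter (fun u => negb (dec (In u T))) Sv) T).
  assert (Hpairs : forall a b, In (a, b) pairs <-> (In a Sv /\ ~ In a T) /\ In b T).
  { intros a b. unfold pairs. rewrite in_prod_iff, filter_In. split.
    - intros [[H1 H2] H3]. split; auto. split; auto. intros H. apply (proj2 (decP _)) in H. rewrite H in H2; discriminate.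
    - intros [[H1 H2] H3]. split; auto. split; auto. destruct (dec (In a T)) eqn:E. apply (proj1 (decP _)) in E. contradiction. reflexivity. }
  assert (Hne : pairs <> []).
  { intros E. assert (In (u0, t0) pairs) by (apply Hpairs; split; auto; left; auto). rewrite E in H; auto. }
  set (slack := fun pr : V * V => d (fst pr) (snd pr) - s * (g (fst pr) - g (snd pr))).
  destruct (list_argmin pairs slack Hne) as [[us vs] [Hin Hmin]].
  apply Hpairs in Hin as [[Hus Hus'] Hvs].
  assert (Hsl : forall a b, In a Sv -> In b Sv -> 0 <= d a b - s * (g a - g b)).
  { intros a b Ha Hb. pose proof (LG a b Ha Hb). pose proof (LG b a Hb Ha).
    rewrite (d_sym d Hd b a) in H0. destruct Hs as [-> | ->]; lra. }
  set (t := slack (us, vs)).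
  assert (Ht : 0 <= t) by (apply Hsl; auto).
  assert (Htle : forall a b, In a Sv -> ~ In a T -> In b T -> t <= d a b - s * (g a - g b)).
  { intros a b Ha Ha' Hb. apply (Hmin (a, b)). apply Hpairs; auto. }
  exists (fun x => if excluded_middle_informative (In x T) then g x else g x + s * t).
  exists (us :: T). split; [|split; [|split; [|split; [|split]]]].
  - constructor; auto.
  - intros x [<-|Hx]; auto.
  - simpl in *. lia.
  - intros x [<-|Hx].
    + destruct excluded_middle_informative; [tauto|].
      assert (E : g us + s * t = g vs + s * d us vs).
      { unfold t, slack; simpl. destruct Hs as [-> | ->]; ring. }
      rewrite E. destruct (sigl_plus k (g vs) us vs) as [P1 P2]; auto.
      destruct Hs as [-> | ->]; [replace (g vs + 1 * d us vs) with (g vs + d us vs) by ring; auto|].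
      replace (g vs + -1 * d us vs) with (g vs - d us vs) by ring; auto.
    + destruct excluded_middle_informative; [|tauto]. apply sigl_mono; auto.
  - intros a b Ha Hb. pose proof (LG a b Ha Hb).
    destruct (excluded_middle_informative (In a T)); destruct (excluded_middle_informative (In b T)).
    + auto.
    + pose proof (Htle b a Hb n i). rewrite (d_sym d Hd b a) in H0. destruct Hs as [-> | ->]; lra.
    + pose proof (Htle a b Ha n i). destruct Hs as [-> | ->]; lra.
    + lra.
  - apply Rle_trans with (dot Sv g w); auto.
    unfold dot. rewrite (fsum_ext _ (fun u => (if excluded_middle_informative (In u T) then g u else g u + s * t) * w u) (fun u => g u * w u + (s * t) * (if excluded_middle_informative (In u T) then 0 else w u))).
    + rewrite fsum_plus, fsum_scal. fold WC. assert (0 <= s * t * WC) by (replace (s * t * WC) with (t * (s * WC)) by ring; apply Rmult_le_pos; auto). lra.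
    + intros x _. destruct excluded_middle_informative; ring.
Qed.

Lemma push_all s0 : In s0 Sv -> zs Sv w -> Lip d Sv f ->
  forall k, (S k <= length Sv)%nat -> exists g, Inv k g.
Proof. intros Hs0 Hz Hf. induction k; intros Hk.
  - exists (fun u => f u - f s0). exists [s0]. split; [|split; [|split; [|split; [|split]]]].
    + constructor; auto; constructor.
    + intros x [<-|[]]; auto.
    + auto.
    + intros x [<-|[]]. simpl. left; lra.
    + intros a b Ha Hb. pose proof (Hf a b Ha Hb). lra.
    + right. unfold dot. rewrite (fsum_ext _ (fun u => (f u - f s0) * w u) (fun u => f u * w u - f s0 * w u)) by (intros; ring).
      rewrite fsum_minus, fsum_scal. unfold zs in Hz. rewrite Hz. ring.
  - destruct IHk as [g Hg]; [lia|]. apply (push_step k g); auto.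
Qed.

Fixpoint funs (L : list V) (Sg : list R) : list (V -> R) := match L with
  | [] => [fun _ => 0]
  | a :: L' => flat_map (fun s => map (fun h => fun v => if excluded_middle_informative (v = a) then s else h v) (funs L' Sg)) Sg
  end.
Lemma funs_complete L Sg g : (forall u, In u L -> In (g u) Sg) -> exists h, In h (funs L Sg) /\ forall u, In u L -> h u = g u.
Proof. revert g; induction L as [|a L IH]; intros g Hg.
  - exists (fun _ => 0); split; [left; auto|]. intros u [].
  - destruct (IH g) as [h [Hh1 Hh2]]; [intros; apply Hg; right; auto|].
    exists (fun v => if excluded_middle_informative (v = a) then g a else h v). split.
    + simpl. apply in_flat_map. exists (g a); split; [apply Hg; left; auto|]. apply in_map_iff. exists h; auto.
    + intros u Hu. destruct excluded_middle_informative as [->|Hne]; auto.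
      apply Hh2. destruct Hu; [congruence|auto].
Qed.

Definition Fam := filter (fun h => dec (Lip d Sv h)) (funs Sv (sigl (length Sv))).

Lemma Fam_Lip h : In h Fam -> Lip d Sv h.
Proof. unfold Fam; rewrite filter_In; intros [_ H]; apply decP; auto. Qed.

End Push.

Section Rep.
Context {V : Type} (d : V -> V -> R) (Sv : list V).
Hypothesis Hd : is_distance d.
Hypothesis HN : NoDup Sv.

Lemma push_final s0 f w : In s0 Sv -> zs Sv w -> Lip d Sv f -> exists h, In h (Fam d Sv) /\ dot Sv f w <= dot Sv h w.
Proof. intros Hs0 Hz Hf.
  assert (HL : (0 < length Sv)%nat) by (destruct Sv; [destruct Hs0| simpl; lia]).
  destruct (push_all d Sv Hd HN f w s0 Hs0 Hz Hf (pred (length Sv))) as [g [T [NT [IT [LT [VT [LG OG]]]]]]]; [lia|].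
  assert (Hcov : incl Sv T) by (apply NoDup_length_incl; auto; lia).
  destruct (funs_complete Sv (sigl d Sv (length Sv)) g) as [h [Hh1 Hh2]].
  { intros u Hu. apply Hcov in Hu. apply VT in Hu.
    replace (length Sv) with (S (pred (length Sv))) by lia. apply sigl_mono; auto. }
  exists h. split.
  - unfold Fam. apply filter_In. split; auto. apply decP. intros a b Ha Hb. rewrite !Hh2; auto.
  - unfold dot in *. rewrite (fsum_ext _ (fun u => h u * w u) (fun u => g u * w u)); auto.
    intros; rewrite Hh2; auto.
Qed.

Theorem W1_rep : Sv <> [] -> forall m n : V -> R, (forall x, 0 <= m x) -> (forall x, 0 <= n x) ->
  (forall x, ~ In x Sv -> m x = 0) -> (forall x, ~ In x Sv -> n x = 0) -> fsum Sv m = fsum Sv n ->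
  (exists h, In h (Fam d Sv) /\ W1 d m n = dot Sv h (fun x => m x - n x)) /\
  (forall h, In h (Fam d Sv) -> dot Sv h (fun x => m x - n x) <= W1 d m n).
Proof. intros Hne m n Hm Hn Sm Sn Heq.
  destruct Sv as [|s0 Sv'] eqn:ES; [congruence|]. rewrite <- ES in *.
  assert (Hs0 : In s0 Sv) by (rewrite ES; left; auto).
  set (w0 := fun x => m x - n x).
  assert (Hz : zs Sv w0) by (unfold zs, w0; rewrite fsum_minus; lra).
  destruct (W1_le_P d Sv Hd HN m n Hm Hn Sm Sn Hz) as [HW1P [c0 Hc0]].
  assert (Hweak : forall h, Lip d Sv h -> dot Sv h w0 <= W1 d m n).
  { intros h Hh. unfold W1. apply glb_ge; [exists c0; auto|].
    intros x [pi [L [Hc ->]]]. apply (weak_dual d Sv HN m n h pi L); auto. }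
  split; [|intros h Hh; apply Hweak, Fam_Lip; auto].
  set (D := fun x : V -> R => forall v, ~ In v Sv -> x v = 0).
  set (proj := fun x : V -> R => fun u => x u + (- fsum Sv x) * indv s0 u).
  set (p := fun x => P d Sv (proj x)).
  assert (Hpz : forall x, zs Sv (proj x)).
  { intros x; unfold zs, proj. rewrite fsum_plus, fsum_scal, fsum_indv1; auto; ring. }
  assert (Hproj0 : forall x, fsum Sv x = 0 -> proj x = x).
  { intros x Hx. unfold proj. rewrite Hx. apply functional_extensionality; intros; ring. }
  destruct (hb_final D p) with (Sv := Sv) (x0 := w0) as [c [Hc1 Hc2]]; auto.
  - intros v _; reflexivity.
  - intros x y Hx Hy v Hv; unfold vadd; rewrite Hx, Hy; auto; ring.
  - intros t x Hx v Hv; unfold vscal; rewrite Hx; auto; ring.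
  - intros x y _ _. unfold p.
    replace (proj (vadd x y)) with (fun u => proj x u + proj y u).
    + apply P_sub; auto.
    + unfold proj, vadd. apply functional_extensionality; intros. rewrite fsum_plus. ring.
  - intros t x Ht _. unfold p.
    replace (proj (vscal t x)) with (fun u => t * proj x u).
    + apply P_hom; auto.
    + unfold proj, vscal. apply functional_extensionality; intros. rewrite fsum_scal. ring.
  - intros u Hu v Hv. apply indv_neq. intros ->; auto.
  - intros v Hv. unfold w0; rewrite Sm, Sn; auto; ring.
  - assert (HLc : Lip d Sv c).
    { intros u v Hu Hv. set (x := fun y => indv u y - indv v y).
      assert (Dx : D x). { intros y Hy. unfold x. rewrite !indv_neq; try ring; intros ->; auto. }
      specialize (Hc1 x Dx). unfold x in Hc1 at 1.
      rewrite (fsum_ext _ _ (fun y => c y * indv u y - c y * indv v y)) in Hc1 by (intros; ring).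
      rewrite fsum_minus, !fsum_indv' in Hc1; auto.
      unfold p in Hc1. rewrite Hproj0 in Hc1.
      - eapply Rle_trans; [apply Hc1|]. apply P_ind; auto.
      - unfold x; rewrite fsum_minus, !fsum_indv1; auto; ring. }
    destruct (push_final s0 c w0 Hs0 Hz HLc) as [h [Hh1 Hh2]].
    exists h; split; auto. apply Rle_antisym.
    + apply Rle_trans with (dot Sv c w0); auto. unfold dot. rewrite Hc2. unfold p. rewrite Hproj0; auto.
    + apply Hweak, Fam_Lip; auto.
Qed.
End Rep.

Definition analytic_at (g : R -> R) (x0 : R) := exists r, 0 < r /\ exists c : nat -> R,
  forall x, Rabs (x - x0) < r -> is_pseries c (x - x0) (g x).

Lemma is_series_const_sum (f : nat -> R) l : (forall n, sum_n f n = l) -> is_series f l.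
Proof. intros H. unfold is_series. eapply filterlim_ext; [|apply filterlim_const].
  intros n; simpl; rewrite H; reflexivity. Qed.

Lemma is_pseries_e (a y : R) : @is_pseries R_AbsRing R_NormedModule (fun k => match k with O => a | S _ => 0 end) y a.
Proof. unfold is_pseries. apply is_series_const_sum. induction n.
  - rewrite sum_O. cbv beta iota. change (pow_n y 0 * a = a). rewrite pow_n_pow. simpl. ring.
  - rewrite sum_Sn, IHn. cbv beta iota. change (a + pow_n y (S n) * 0 = a). ring. Qed.

Lemma is_pseries_zero y : @is_pseries R_AbsRing R_NormedModule (fun _ => 0) y 0.
Proof. eapply is_pseries_ext; [|apply (is_pseries_e 0 y)]. intros [|n]; auto. Qed.

Lemma an_shift g z r (c : nat -> R) : (forall x, Rabs (x - z) < r -> is_pseries c (x - z) (g x)) ->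
  forall y, Rabs y < r -> is_pseries c y (g (z + y)).
Proof. intros H y Hy. specialize (H (z + y)). replace (z + y - z) with y in H by ring. auto. Qed.

Lemma radius_lemma (c : nat -> R) r : (forall y, Rabs y < r -> ex_pseries c y) -> forall y, Rabs y < r -> Rbar_lt (Rabs y) (CV_radius c).
Proof. intros H y Hy. set (r' := (Rabs y + r) / 2).
  assert (Hr' : Rabs r' = r') by (apply Rabs_pos_eq; unfold r'; pose proof (Rabs_pos y); lra).
  assert (Ex : ex_pseries c r') by (apply H; rewrite Hr'; unfold r'; lra).
  apply ex_series_lim_0 in Ex.
  assert (Hl : is_lim_seq (fun n => c n * r' ^ n) 0).
  { eapply is_lim_seq_ext; [|apply Ex]. intros n. change (scal (pow_n r' n) (c n)) with (pow_n r' n * c n). rewrite pow_n_pow. apply Rmult_comm. }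
  destruct (Rbar_lt_le_dec (CV_radius c) (Rabs r')) as [Hlt|Hle].
  - exfalso. apply (CV_disk_outside c r' Hlt Hl).
  - eapply Rbar_lt_le_trans; [|apply Hle]. simpl. rewrite Hr'. unfold r'; lra.
Qed.

Lemma an_cv g z r (c : nat -> R) : (forall x, Rabs (x - z) < r -> is_pseries c (x - z) (g x)) ->
  forall y, Rabs y < r -> Rbar_lt (Rabs y) (CV_radius c).
Proof. intros H. apply radius_lemma. intros y Hy. exists (g (z + y)). apply (an_shift g z r c); auto. Qed.

Lemma an_val g z r (c : nat -> R) : (forall x, Rabs (x - z) < r -> is_pseries c (x - z) (g x)) ->
  forall x, Rabs (x - z) < r -> g x = PSeries c (x - z).
Proof. intros H x Hx. symmetry; apply is_pseries_unique; auto. Qed.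

Lemma cont_eps f x0 : continuity_pt f x0 -> forall eps, 0 < eps -> exists del, 0 < del /\
  forall y, Rabs (y - x0) < del -> Rabs (f y - f x0) < eps.
Proof. intros H eps He. destruct (H eps He) as [del [Hd H2]]. exists del; split; auto.
  intros y Hy. destruct (Req_dec y x0) as [->|Hne]. rewrite Rminus_diag, Rabs_R0; auto.
  apply (H2 y). split; [split; auto; constructor|]. simpl. unfold R_dist. auto. Qed.

Lemma CV_radius_decr_n a n : CV_radius (PS_decr_n a n) = CV_radius a.
Proof. induction n.
  - apply CV_radius_ext; intros; unfold PS_decr_n; auto.
  - rewrite <- IHn, <- (CV_radius_decr_1 (PS_decr_n a n)). apply CV_radius_ext; intros k. unfold PS_decr_n, PS_decr_1.
    f_equal; lia. Qed.

Lemma first_nonzero (a : nat -> R) n : a n <> 0 -> exists N, a N <> 0 /\ forall k, (k < N)%nat -> a k = 0.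
Proof. induction n as [n IH] using (well_founded_induction Wf_nat.lt_wf). intros Hn.
  destruct (classic (exists k, (k < n)%nat /\ a k <> 0)) as [[k [Hk1 Hk2]]|Hno].
  - apply (IH k); auto.
  - exists n; split; auto. intros k Hk. destruct (Req_dec (a k) 0); auto. exfalso; apply Hno; eauto. Qed.

Lemma sign_lemma D z : analytic_at D z -> exists rho, 0 < rho /\ forall x y, Rabs (x - z) < rho -> Rabs (y - z) < rho ->
  x <> z -> 0 <= (x - z) * (y - z) -> D x <= 0 -> D y <= 0.
Proof. intros [r [Hr [a Ha]]].
  destruct (classic (forall n, a n = 0)) as [Hz|Hnz].
  - exists r; split; auto. intros x y Hx Hy _ _ _.
    rewrite (an_val D z r a Ha y Hy). rewrite (PSeries_ext a (fun _ => 0)); auto. rewrite PSeries_const_0; lra.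
  - apply not_all_ex_not in Hnz as [n Hn]. destruct (first_nonzero a n Hn) as [N [HN HN0]].
    set (b := PS_decr_n a N).
    assert (Hcv : Rbar_lt 0 (CV_radius b)).
    { unfold b; rewrite CV_radius_decr_n. replace 0 with (Rabs 0) by apply Rabs_R0. apply (an_cv D z r a Ha).
      rewrite Rabs_R0; auto. }
    assert (Hc : continuity_pt (PSeries b) 0) by (apply PSeries_continuity; rewrite Rabs_R0; auto).
    destruct (cont_eps _ _ Hc (Rabs (a N))) as [del [Hdel Hdel2]]; [apply Rabs_pos_lt; auto|].
    assert (Hb0 : b 0%nat = a N) by (unfold b, PS_decr_n; rewrite Nat.add_0_r; auto).
    rewrite PSeries_0, Hb0 in Hdel2.
    assert (Hsg : forall y, Rabs y < del -> 0 < PSeries b y * a N).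
    { intros y Hy. specialize (Hdel2 y). rewrite Rminus_0_r in Hdel2. specialize (Hdel2 Hy).
      destruct (Rlt_dec 0 (a N)).
      - rewrite (Rabs_pos_eq (a N)) in Hdel2 by lra. apply Rabs_def2 in Hdel2.
        apply Rmult_lt_0_compat; lra.
      - rewrite (Rabs_left1 (a N)) in Hdel2 by lra. apply Rabs_def2 in Hdel2. assert (a N < 0) by (destruct (Req_dec (a N) 0); [tauto|lra]).
        replace (PSeries b y * a N) with ((- PSeries b y) * (- a N)) by ring. apply Rmult_lt_0_compat; lra. }
    assert (Hfac : forall x, Rabs (x - z) < r -> D x = (x - z) ^ N * PSeries b (x - z)).
    { intros x Hx. rewrite (an_val D z r a Ha x Hx). apply PSeries_decr_n_aux. auto. }
    exists (Rmin r del); split; [apply Rmin_pos; auto|].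
    intros x y Hx Hy Hxz Hxy HDx.
    assert (Hx1 : Rabs (x - z) < r) by (eapply Rlt_le_trans; [apply Hx|apply Rmin_l]).
    assert (Hx2 : Rabs (x - z) < del) by (eapply Rlt_le_trans; [apply Hx|apply Rmin_r]).
    assert (Hy1 : Rabs (y - z) < r) by (eapply Rlt_le_trans; [apply Hy|apply Rmin_l]).
    assert (Hy2 : Rabs (y - z) < del) by (eapply Rlt_le_trans; [apply Hy|apply Rmin_r]).
    rewrite Hfac in HDx |- *; auto.
    set (A := (x - z) ^ N) in *. set (B := (y - z) ^ N).
    set (T1 := PSeries b (x - z)) in *. set (T2 := PSeries b (y - z)).
    assert (HAB : 0 <= A * B) by (unfold A, B; rewrite <- Rpow_mult_distr; apply pow_le; auto).
    assert (HA : A <> 0) by (unfold A; apply pow_nonzero; lra).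
    assert (H1 : 0 < T1 * a N) by (apply Hsg; auto).
    assert (H2 : 0 < T2 * a N) by (apply Hsg; auto).
    assert (HT : 0 < T1 * T2).
    { assert (0 < (T1 * a N) * (T2 * a N)) by (apply Rmult_lt_0_compat; auto).
      assert (0 < a N * a N).
      { destruct (Rlt_dec 0 (a N)); [nra|]. assert (a N < 0) by (destruct (Req_dec (a N) 0); [tauto|lra]). nra. }
      destruct (Rle_dec (T1 * T2) 0) as [Hle|Hle]; [|lra]. exfalso.
      assert (E : (T1 * a N) * (T2 * a N) = (T1 * T2) * (a N * a N)) by ring.
      assert ((T1 * T2) * (a N * a N) <= 0) by (apply Rmult_le_0_r; lra). lra. }
    assert (HAT : A * T1 <> 0) by (apply Rmult_integral_contrapositive; split; auto; intro E; rewrite E in H1; lra).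
    assert (0 <= (A * T1) * (B * T2)) by (replace ((A * T1) * (B * T2)) with ((A * B) * (T1 * T2)) by ring; apply Rmult_le_pos; lra).
    nra.
Qed.

Lemma between_abs y1 y2 x rho : Rabs y1 < rho -> Rabs y2 < rho -> Rmin y1 y2 <= x <= Rmax y1 y2 -> Rabs x < rho.
Proof. intros H1 H2 H. apply Rabs_def2 in H1; apply Rabs_def2 in H2. apply Rabs_def1;
  unfold Rmin, Rmax in H; destruct Rle_dec; lra. Qed.

Lemma lip_lemma g t : analytic_at g t -> exists rho, 0 < rho /\ exists K, 0 <= K /\
  forall s1 s2, Rabs (s1 - t) < rho -> Rabs (s2 - t) < rho -> Rabs (g s1 - g s2) <= K * Rabs (s1 - s2).
Proof. intros [r [Hr [c Hc]]].
  pose proof (an_cv g t r c Hc) as Hcv.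
  assert (Hc0 : continuity_pt (PSeries (PS_derive c)) 0).
  { apply PSeries_continuity. rewrite CV_radius_derive. apply Hcv. rewrite Rabs_R0; auto. }
  destruct (cont_eps _ _ Hc0 1) as [del [Hdel Hd2]]; [lra|].
  exists (Rmin r del); split; [apply Rmin_pos; auto|].
  exists (Rabs (PSeries (PS_derive c) 0) + 1); split; [pose proof (Rabs_pos (PSeries (PS_derive c) 0)); lra|].
  intros s1 s2 H1 H2.
  rewrite (an_val g t r c Hc s1), (an_val g t r c Hc s2) by (eapply Rlt_le_trans; [eassumption|apply Rmin_l]).
  destruct (MVT_gen (PSeries c) (s2 - t) (s1 - t) (PSeries (PS_derive c))) as [xi [Hxi Heq]].
  - intros x Hx. apply is_derive_PSeries. apply Hcv.
    apply (between_abs (s2 - t) (s1 - t)); try (eapply Rlt_le_trans; [eassumption|apply Rmin_l]). lra.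
  - intros x Hx. apply PSeries_continuity. apply Hcv.
    apply (between_abs (s2 - t) (s1 - t)); try (eapply Rlt_le_trans; [eassumption|apply Rmin_l]). auto.
  - rewrite Heq. replace (s1 - t - (s2 - t)) with (s1 - s2) by ring. rewrite Rabs_mult.
    apply Rmult_le_compat_r; [apply Rabs_pos|].
    assert (Hx : Rabs xi < Rmin r del) by (apply (between_abs (s2 - t) (s1 - t)); auto).
    specialize (Hd2 xi). rewrite Rminus_0_r in Hd2.
    assert (Rabs (PSeries (PS_derive c) xi - PSeries (PS_derive c) 0) < 1) by (apply Hd2; eapply Rlt_le_trans; [eassumption|apply Rmin_r]).
    pose proof (Rabs_triang_inv (PSeries (PS_derive c) xi) (PSeries (PS_derive c) 0)). lra.
Qed.

Lemma an_ext f g x : analytic_at f x -> (forall e, f e = g e) -> analytic_at g x.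
Proof. intros [r [Hr [c Hc]]] H. exists r; split; auto; exists c; intros; rewrite <- H; auto. Qed.

Lemma an_plus f g x : analytic_at f x -> analytic_at g x -> analytic_at (fun e => f e + g e) x.
Proof. intros [r1 [Hr1 [c1 H1]]] [r2 [Hr2 [c2 H2]]]. exists (Rmin r1 r2); split; [apply Rmin_pos; auto|].
  exists (PS_plus c1 c2). intros y Hy. apply (is_pseries_plus c1 c2 (y - x) (f y) (g y)).
  apply H1; eapply Rlt_le_trans; [eassumption|apply Rmin_l].
  apply H2; eapply Rlt_le_trans; [eassumption|apply Rmin_r]. Qed.

Lemma an_scal k f x : analytic_at f x -> analytic_at (fun e => k * f e) x.
Proof. intros [r [Hr [c H]]]. exists r; split; auto. exists (PS_scal k c). intros y Hy.
  apply (is_pseries_scal k c (y - x) (f y)); auto. apply Rmult_comm. Qed.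

Lemma an_const a x : analytic_at (fun _ => a) x.
Proof. exists 1; split; [lra|]. exists (fun k => match k with O => a | S _ => 0 end). intros; apply is_pseries_e. Qed.

Lemma an_mulx f x : analytic_at f x -> analytic_at (fun e => e * f e) x.
Proof. intros [r [Hr [c H]]]. exists r; split; auto. exists (PS_plus (PS_incr_1 c) (PS_scal x c)). intros y Hy.
  replace (y * f y) with (plus (scal (y - x) (f y)) (scal x (f y))) by (change ((y - x) * f y + x * f y = y * f y); ring).
  apply (is_pseries_plus (PS_incr_1 c) (PS_scal x c) (y - x)). apply (is_pseries_incr_1 c (y - x)); auto.
  apply (is_pseries_scal x c (y - x)); auto. apply Rmult_comm. Qed.

Lemma an_poly p x : analytic_at (poly_eval p) x.
Proof. induction p as [|a p IH].
  - apply (an_ext (fun _ => 0)); [apply an_const|reflexivity].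
  - apply (an_ext (fun e => a + e * poly_eval p e)); [|reflexivity].
    apply an_plus; [apply an_const|apply an_mulx; auto]. Qed.

Lemma affine_poly g : is_affine g -> is_polynomial g.
Proof. intros [a [b H]]. exists [a; b]. intros x; rewrite H; simpl; ring. Qed.

Fixpoint padd (p q : list R) : list R := match p, q with
  | [], _ => q | _, [] => p | a :: p', b :: q' => (a + b) :: padd p' q' end.
Lemma padd_eval p q x : poly_eval (padd p q) x = poly_eval p x + poly_eval q x.
Proof. revert q; induction p as [|a p IH]; intros q; [simpl; ring|]. destruct q as [|b q]; [simpl; ring|].
  simpl. rewrite IH. ring. Qed.
Lemma pscal_eval k p x : poly_eval (map (Rmult k) p) x = k * poly_eval p x.
Proof. induction p as [|a p IH]; simpl; [ring|]. rewrite IH; ring. Qed.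

Lemma unif_list {A} (L : list A) (P : A -> R -> Prop) :
  (forall a r r', In a L -> 0 < r' <= r -> P a r -> P a r') ->
  (forall a, In a L -> exists r, 0 < r /\ P a r) -> exists r, 0 < r /\ forall a, In a L -> P a r.
Proof. induction L as [|a L IH]; intros Hm Hex.
  - exists 1; split; [lra|]; intros _ [].
  - destruct (Hex a) as [r1 [Hr1 H1]]; [left; auto|].
    destruct IH as [r2 [Hr2 H2]]; [intros; eapply Hm; eauto; right; auto|intros; apply Hex; right; auto|].
    exists (Rmin r1 r2); split; [apply Rmin_pos; auto|]. intros b [<-|Hb].
    + apply (Hm _ r1); [left; auto| split; [apply Rmin_pos; auto|apply Rmin_l]|auto].
    + apply (Hm _ r2); [right; auto| split; [apply Rmin_pos; auto|apply Rmin_r]|auto].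
Qed.
Lemma unif_list_up {A} (L : list A) (P : A -> R -> Prop) :
  (forall a r r', In a L -> r <= r' -> P a r -> P a r') ->
  (forall a, In a L -> exists r, 0 <= r /\ P a r) -> exists r, 0 <= r /\ forall a, In a L -> P a r.
Proof. induction L as [|a L IH]; intros Hm Hex.
  - exists 0; split; [lra|]; intros _ [].
  - destruct (Hex a) as [r1 [Hr1 H1]]; [left; auto|].
    destruct IH as [r2 [Hr2 H2]]; [intros; eapply Hm; eauto; right; auto|intros; apply Hex; right; auto|].
    exists (Rmax r1 r2); split; [apply Rle_trans with r1; auto; apply Rmax_l|]. intros b [<-|Hb].
    + apply (Hm _ r1); [left; auto|apply Rmax_l|auto].
    + apply (Hm _ r2); [right; auto|apply Rmax_r|auto].
Qed.

Section Generic.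
Variables (Hs : list (R -> R)) (f : R -> R) (piece : R -> R -> (R -> R) -> Prop) (del : R).
Hypothesis Hdel : 0 < del.
Hypothesis Han : forall H x, In H Hs -> -del < x < 1 + del -> analytic_at H x.
Hypothesis Hpiece : forall H a b, In H Hs -> 0 <= a -> a < b -> b <= 1 -> piece a b H.
Hypothesis Hmin : forall e, 0 <= e <= 1 -> (exists H, In H Hs /\ f e = H e) /\ forall H, In H Hs -> f e <= H e.

Lemma gen_lip : locally_lipschitz_01 f.
Proof. intros t Ht.
  destruct (unif_list Hs (fun H rho => exists K, 0 <= K /\ forall s1 s2, Rabs (s1 - t) < rho -> Rabs (s2 - t) < rho ->
     Rabs (H s1 - H s2) <= K * Rabs (s1 - s2))) as [rho [Hrho HP]].
  - intros H r r' _ Hr [K [HK HKK]]. exists K; split; auto. intros; apply HKK; lra.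
  - intros H HH. apply lip_lemma. apply Han; auto; lra.
  - destruct (unif_list_up Hs (fun H K => forall s1 s2, Rabs (s1 - t) < rho -> Rabs (s2 - t) < rho ->
       Rabs (H s1 - H s2) <= K * Rabs (s1 - s2))) as [K [HK HPK]].
    + intros H r r' _ Hr HH s1 s2 H1 H2. eapply Rle_trans; [apply HH; auto|].
      apply Rmult_le_compat_r; [apply Rabs_pos|auto].
    + intros H HH. destruct (HP H HH) as [K [HK HKK]]. exists K; auto.
    + exists rho; split; auto. exists K; split; auto. intros s1 s2 Hs1 Hs2 H1 H2.
      destruct (Hmin s1) as [[G1 [HG1 E1]] L1]; [lra|].
      destruct (Hmin s2) as [[G2 [HG2 E2]] L2]; [lra|].
      pose proof (L1 G2 HG2). pose proof (L2 G1 HG1).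
      pose proof (HPK G1 HG1 s1 s2 H1 H2). pose proof (HPK G2 HG2 s1 s2 H1 H2).
      apply Rabs_le_between in H3. apply Rabs_le_between in H4.
      apply Rabs_le. rewrite E1, E2 in *. lra.
Qed.

Lemma local_choice z : 0 <= z <= 1 -> exists rho, 0 < rho /\ forall x0, 0 <= x0 <= 1 -> Rabs (x0 - z) < rho -> x0 <> z ->
  exists H, In H Hs /\ forall y, 0 <= y <= 1 -> Rabs (y - z) < rho -> 0 <= (x0 - z) * (y - z) -> f y = H y.
Proof. intros Hz.
  destruct (unif_list (list_prod Hs Hs) (fun pr rho => forall x y, Rabs (x - z) < rho -> Rabs (y - z) < rho ->
     x <> z -> 0 <= (x - z) * (y - z) -> fst pr x - snd pr x <= 0 -> fst pr y - snd pr y <= 0)) as [rho [Hrho HP]].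
  - intros pr r r' _ Hr HH x y Hx Hy; apply HH; lra.
  - intros [H1 H2] Hin. apply in_prod_iff in Hin as [I1 I2].
    apply (sign_lemma (fun e => H1 e - H2 e)). simpl.
    apply (an_ext (fun e => H1 e + (-1) * H2 e)); [|intros; ring].
    apply an_plus; [|apply an_scal]; apply Han; auto; lra.
  - exists rho; split; auto. intros x0 Hx0 Hd Hne.
    destruct (Hmin x0 Hx0) as [[G [HG E]] L].
    exists G; split; auto. intros y Hy Hyd Hprod.
    destruct (Hmin y Hy) as [[G' [HG' E']] L'].
    assert (forall H, In H Hs -> G y <= H y).
    { intros H HH. assert (G y - H y <= 0); [|lra].
      apply (HP (G, H)) with (x := x0); auto. apply in_prod; auto. simpl. rewrite <- E. specialize (L H HH). lra. }
    specialize (H G' HG'). specialize (L' G HG). lra.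
Qed.

Definition Pw s := exists n (t : nat -> R) (g : nat -> R -> R), t 0%nat = 0 /\ t n = s /\
  (forall i, (i < n)%nat -> t i < t (S i)) /\
  (forall i, (i < n)%nat -> In (g i) Hs /\ forall e, t i <= e <= t (S i) -> f e = g i e).

Lemma Pw_ext s s' H : Pw s -> s < s' -> In H Hs -> (forall e, s <= e <= s' -> f e = H e) -> Pw s'.
Proof. intros [n [t [g [T0 [Tn [Tinc Tp]]]]]] Hss HH HfH.
  exists (S n), (fun i => if Nat.leb i n then t i else s'), (fun i => if Nat.ltb i n then g i else H).
  split; [|split; [|split]].
  - simpl. auto.
  - replace (Nat.leb (S n) n) with false by (symmetry; apply Nat.leb_gt; lia). auto.
  - intros i Hi. destruct (Nat.eq_dec i n) as [->|Hne].
    + rewrite Nat.leb_refl. replace (Nat.leb (S n) n) with false by (symmetry; apply Nat.leb_gt; lia). lra.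
    + replace (Nat.leb i n) with true by (symmetry; apply Nat.leb_le; lia).
      replace (Nat.leb (S i) n) with true by (symmetry; apply Nat.leb_le; lia). apply Tinc; lia.
  - intros i Hi. destruct (Nat.eq_dec i n) as [->|Hne].
    + rewrite Nat.leb_refl, Nat.ltb_irrefl. replace (Nat.leb (S n) n) with false by (symmetry; apply Nat.leb_gt; lia).
      split; auto. intros e He; apply HfH; lra.
    + replace (Nat.leb i n) with true by (symmetry; apply Nat.leb_le; lia).
      replace (Nat.leb (S i) n) with true by (symmetry; apply Nat.leb_le; lia).
      replace (Nat.ltb i n) with true by (symmetry; apply Nat.ltb_lt; lia). apply Tp; lia.
Qed.

Lemma gen_pw : piecewise piece f.
Proof.
  set (A := fun s => 0 <= s <= 1 /\ Pw s).
  assert (A0 : A 0).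
  { split; [lra|]. exists 0%nat, (fun _ => 0), (fun _ => f). split; [auto|split; [auto|split; intros; lia]]. }
  destruct (completeness A) as [z [Hz1 Hz2]].
  - exists 1. intros s [Hs1 _]; lra.
  - exists 0; auto.
  - assert (Z0 : 0 <= z) by (apply Hz1; auto).
    assert (Z1 : z <= 1) by (apply Hz2; intros s [Hs1 _]; lra).
    destruct (local_choice z) as [rho [Hrho Hloc]]; [lra|].
    assert (Hex : exists s, A s /\ z - rho < s).
    { destruct (classic (exists s, A s /\ z - rho < s)) as [?|Hn]; auto. exfalso.
      assert (z <= z - rho); [|lra]. apply Hz2. intros s As. destruct (Rle_dec s (z - rho)); auto.
      exfalso; apply Hn; exists s; split; auto; lra. }
    destruct Hex as [s [As Hs1]].
    assert (Hsz : s <= z) by (apply Hz1; auto).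
    assert (Pz : Pw z).
    { destruct (Req_dec s z) as [<-|Hne]; [apply As|]. destruct As as [As1 As2].
      destruct (Hloc s) as [H [HH HHf]]; [auto| apply Rabs_def1; lra|auto|].
      apply (Pw_ext s z H); [apply As2|lra|auto|]. intros e He. apply HHf; [lra|apply Rabs_def1; lra|nra]. }
    assert (Z2 : z = 1).
    { destruct (Req_dec z 1) as [?|Hne]; auto. exfalso.
      set (z' := Rmin (z + rho / 2) 1).
      assert (Hz' : z < z' <= 1 /\ z' <= z + rho / 2).
      { unfold z', Rmin; destruct Rle_dec; lra. }
      destruct (Hloc z') as [H [HH HHf]]; [lra|apply Rabs_def1; lra|lra|].
      assert (A z'). { split; [lra|]. apply (Pw_ext z z' H); auto; [lra|]. intros e He. apply HHf; [lra|apply Rabs_def1; lra|nra]. }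
      assert (z' <= z) by (apply Hz1; auto). lra. }
    subst z. destruct Pz as [n [t [g [T0 [Tn [Tinc Tp]]]]]].
    assert (Hmono : forall i j, (i <= j)%nat -> (j <= n)%nat -> t i <= t j).
    { intros i j Hij Hjn. induction j.
      - replace i with 0%nat by lia. lra.
      - destruct (Nat.eq_dec i (S j)) as [->|Hne]; [lra|].
        apply Rle_trans with (t j); [apply IHj; lia|]. apply Rlt_le, Tinc; lia. }
    exists n, t, g. split; [auto|split; [auto|split; [auto|]]].
    intros i Hi. destruct (Tp i Hi) as [G1 G2]. split; auto.
    apply Hpiece; auto.
    + rewrite <- T0. apply Hmono; lia.
    + rewrite <- Tn. apply Hmono; lia.
Qed.

End Generic.

Section Main.
Context {V : Type} (d : V -> V -> R) (mu : V -> R -> V -> R) (Q : R -> (R -> R) -> Prop)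
  (piece : R -> R -> (R -> R) -> Prop).
Hypothesis Qmono : forall dl dl' g, 0 < dl' <= dl -> Q dl g -> Q dl' g.
Hypothesis Qzero : forall dl, Q dl (fun _ => 0).
Hypothesis Qplus : forall dl f g, Q dl f -> Q dl g -> Q dl (fun e => f e + g e).
Hypothesis Qscal : forall dl k f, Q dl f -> Q dl (fun e => k * f e).
Hypothesis Qan : forall dl g x, 0 < dl -> Q dl g -> -dl < x < 1 + dl -> analytic_at g x.
Hypothesis Qpiece : forall dl g a b, 0 < dl -> Q dl g -> 0 <= a -> a < b -> b <= 1 -> piece a b g.
Hypothesis Hd : is_distance d.
Hypothesis Hmu : local_random_walk mu.
Hypothesis HG : forall z u, exists dl, 0 < dl /\ exists g, Q dl g /\ forall eps, 0 <= eps <= 1 -> mu z eps u = g eps.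

Lemma Qsum dl (L : list V) (F : V -> R -> R) : (forall u, In u L -> Q dl (F u)) -> Q dl (fun e => fsum L (fun u => F u e)).
Proof. induction L as [|a L IH]; intros H.
  - apply Qzero.
  - apply (Qplus dl (F a) (fun e => fsum L (fun u => F u e))); [apply H; left; auto|apply IH; intros; apply H; right; auto].
Qed.

Theorem main_generic x y : x <> y -> locally_lipschitz_01 (ORic d mu x y) /\ piecewise piece (ORic d mu x y).
Proof. intros Hxy.
  assert (Hdxy : 0 < d x y).
  { destruct Hd as [H1 [H2 _]]. destruct (Req_dec (d x y) 0) as [E|E]; [apply H2 in E; tauto|]. specialize (H1 x y); lra. }
  destruct Hmu as [[K HK] [_ _]].
  set (W := fun zu : V * V => exists p : R * (R -> R), 0 < fst p /\ Q (fst p) (snd p) /\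
     forall eps, 0 <= eps <= 1 -> mu (fst zu) eps (snd zu) = snd p eps).
  assert (HW : forall zu, W zu).
  { intros [z u]. destruct (HG z u) as [dl [Hdl [g [Hg Heq]]]]. exists (dl, g); auto. }
  set (ch := fun zu => proj1_sig (constructive_indefinite_description _ (HW zu))).
  assert (Hch : forall z u, 0 < fst (ch (z, u)) /\ Q (fst (ch (z, u))) (snd (ch (z, u))) /\
     forall eps, 0 <= eps <= 1 -> mu z eps u = snd (ch (z, u)) eps).
  { intros z u. unfold ch. destruct (constructive_indefinite_description _ (HW (z, u))) as [p Hp]. exact Hp. }
  set (G := fun z u => snd (ch (z, u))).
  set (decV := fun a b : V => excluded_middle_informative (a = b)).
  set (Sv := nodup decV (K x ++ K y)).
  assert (HN : NoDup Sv) by apply NoDup_nodup.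
  assert (HIn : forall u, In u Sv <-> In u (K x) \/ In u (K y)).
  { intros u. unfold Sv. rewrite nodup_In, in_app_iff. tauto. }
  destruct (HK x) as [NKx HKx]. destruct (HK y) as [NKy HKy].
  assert (Hne : Sv <> []).
  { destruct (HKx 0) as [_ [_ Hs1]]; [lra|].
    assert (Hk : exists a, In a (K x)).
    { destruct (K x) as [|a l]; [unfold fsum in Hs1; simpl in Hs1; lra|exists a; left; auto]. }
    destruct Hk as [a Ha]. intros E2. assert (In a Sv) by (apply HIn; left; auto). rewrite E2 in H; auto. }
  assert (Hprob : forall z eps, 0 <= eps <= 1 -> (z = x \/ z = y) -> (forall v, 0 <= mu z eps v) /\
     (forall v, ~ In v Sv -> mu z eps v = 0) /\ fsum Sv (mu z eps) = 1).
  { intros z eps He Hz. destruct (HK z) as [NK HKz]. destruct (HKz eps He) as [A1 [A2 A3]].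
    assert (Hsub : forall v, In v (K z) -> In v Sv) by (intros v Hv; apply HIn; destruct Hz; subst; auto).
    split; auto. split.
    - intros v Hv. apply A2. intros Hv'. apply Hv, Hsub; auto.
    - rewrite <- A3. apply fsum_transfer; auto. intros v Hv. destruct (classic (In v (K z))) as [I|I].
      + split; auto.
      + exfalso; apply Hv, A2; auto. }
  set (Hfun := fun h : V -> R => fun e => fsum Sv (fun u => (1 - h u / d x y) * G x u e + (h u / d x y) * G y u e)).
  set (Hs := map Hfun (Fam d Sv)).
  destruct (unif_list (list_prod [x; y] Sv) (fun zu dl => dl <= fst (ch zu))) as [dl [Hdl Hdl2]].
  { intros; lra. }
  { intros zu _. exists (fst (ch zu)); split; [|lra]. destruct zu as [z u]; apply Hch. }
  assert (HQG : forall z u, (z = x \/ z = y) -> In u Sv -> Q dl (G z u)).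
  { intros z u Hz Hu. apply (Qmono (fst (ch (z, u)))); [split; auto; apply (Hdl2 (z, u)); apply in_prod; auto; destruct Hz; subst; simpl; auto|].
    apply Hch. }
  assert (HQH : forall h, Q dl (Hfun h)).
  { intros h. unfold Hfun. apply (Qsum dl Sv (fun u e => (1 - h u / d x y) * G x u e + h u / d x y * G y u e)).
    intros u Hu. apply Qplus; apply Qscal; apply HQG; auto. }
  assert (HHs : forall H, In H Hs -> exists h, In h (Fam d Sv) /\ H = Hfun h).
  { intros H HH. apply in_map_iff in HH as [h [<- Hh]]. eauto. }
  assert (Hval : forall h e, 0 <= e <= 1 -> Hfun h e = 1 - dot Sv h (fun v => mu x e v - mu y e v) / d x y).
  { intros h e He. unfold Hfun, dot.
    rewrite (fsum_ext _ _ (fun u => mu x e u - (h u * (mu x e u - mu y e u)) / d x y)).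
    - rewrite fsum_minus. destruct (Hprob x e He (or_introl eq_refl)) as [_ [_ S1]]. rewrite S1.
      unfold Rdiv. rewrite fsum_scalr. ring.
    - intros u Hu. unfold G. rewrite <- !(proj2 (proj2 (Hch _ u))) by auto. field. lra. }
  assert (Hmin : forall e, 0 <= e <= 1 -> (exists H, In H Hs /\ ORic d mu x y e = H e) /\
     forall H, In H Hs -> ORic d mu x y e <= H e).
  { intros e He. destruct (Hprob x e He (or_introl eq_refl)) as [P1 [P2 P3]].
    destruct (Hprob y e He (or_intror eq_refl)) as [Q1 [Q2 Q3]].
    destruct (W1_rep d Sv Hd HN Hne (mu x e) (mu y e) P1 Q1 P2 Q2 (eq_trans P3 (eq_sym Q3))) as [[h [Hh1 Hh2]] Hall].
    unfold ORic. split.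
    - exists (Hfun h). split; [apply in_map; auto|]. rewrite Hval, Hh2; auto.
    - intros H HH. destruct (HHs H HH) as [h' [Hh' ->]]. rewrite Hval; auto.
      specialize (Hall h' Hh'). apply Rplus_le_compat_l, Ropp_le_contravar.
      apply Rmult_le_compat_r; auto. apply Rlt_le, Rinv_0_lt_compat; auto. }
  split.
  - apply (gen_lip Hs _ dl); auto. intros H z HH Hz. destruct (HHs H HH) as [h [_ ->]]. apply (Qan dl); auto.
  - apply (gen_pw Hs _ piece dl); auto.
    + intros H z HH Hz. destruct (HHs H HH) as [h [_ ->]]. apply (Qan dl); auto.
    + intros H a b HH Ha Hab Hb. destruct (HHs H HH) as [h [_ ->]]. apply (Qpiece dl); auto.
Qed.
End Main.

Theorem mainTheorem5 :
  forall (V : Type) (E : V -> V -> Prop) (d : V -> V -> R)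
         (mu : V -> R -> V -> R),
    locally_finite_graph E ->
    is_distance d -> complete_distance d ->
    local_random_walk mu ->
    (time_analytic mu -> forall x y : V, x <> y ->
       locally_lipschitz_01 (ORic d mu x y) /\
       piecewise analytic_piece (ORic d mu x y)) /\
    (time_affine mu -> forall x y : V, x <> y ->
       locally_lipschitz_01 (ORic d mu x y) /\
       piecewise affine_piece (ORic d mu x y)) /\
    (time_polynomial mu -> forall x y : V, x <> y ->
       locally_lipschitz_01 (ORic d mu x y) /\
       piecewise polynomial_piece (ORic d mu x y)).
Proof.
  intros V E d mu _ Hd _ Hmu. split; [|split].
  - intros Hta x y Hxy.
    apply (main_generic d mu (fun dl g => forall z, -dl < z < 1 + dl -> analytic_at g z) analytic_piece);
      [ | | | | | | exact Hd | exact Hmu | | exact Hxy].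
    + intros dl dl' g Hd' Hg z Hz. apply Hg; lra.
    + intros; apply an_const.
    + intros; apply an_plus; auto.
    + intros; apply an_scal; auto.
    + intros dl g z _ Hg Hz; apply Hg; auto.
    + intros dl g a b Hdl Hg Ha Hab Hb. exists dl; split; auto. intros z Hz. apply Hg; lra.
    + intros z u. destruct (Hta z u) as [dl [Hdl [g [Hg Heq]]]]. exists dl; split; auto. exists g; split; auto.
  - intros Hta x y Hxy.
    apply (main_generic d mu (fun _ g => is_affine g) affine_piece);
      [ | | | | | | exact Hd | exact Hmu | | exact Hxy].
    + intros; auto.
    + intros; exists 0, 0; intros; ring.
    + intros dl f g [a1 [b1 H1]] [a2 [b2 H2]]. exists (a1 + a2), (b1 + b2); intros; rewrite H1, H2; ring.
    + intros dl k f [a [b H]]. exists (k * a), (k * b); intros; rewrite H; ring.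
    + intros dl g z _ Hg _. destruct (affine_poly g Hg) as [p Hp].
      apply (an_ext (poly_eval p)); [apply an_poly|intros; rewrite Hp; auto].
    + intros; unfold affine_piece; auto.
    + intros z u. destruct (Hta z u) as [g [Hg Heq]]. exists 1; split; [lra|]. exists g; split; auto.
  - intros Hta x y Hxy.
    apply (main_generic d mu (fun _ g => is_polynomial g) polynomial_piece);
      [ | | | | | | exact Hd | exact Hmu | | exact Hxy].
    + intros; auto.
    + intros; exists []; intros; reflexivity.
    + intros dl f g [p1 H1] [p2 H2]. exists (padd p1 p2); intros; rewrite padd_eval, H1, H2; auto.
    + intros dl k f [p H]. exists (map (Rmult k) p); intros; rewrite pscal_eval, H; auto.
    + intros dl g z _ [p Hp] _.
      apply (an_ext (poly_eval p)); [apply an_poly|intros; rewrite Hp; auto].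
    + intros; unfold polynomial_piece; auto.
    + intros z u. destruct (Hta z u) as [g [Hg Heq]]. exists 1; split; [lra|]. exists g; split; auto.
Qed.
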